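(* Let $g:\mathbb{R}^m\to\overline{\mathbb{R}}$ be a polyhedral function and $(\bar z,\bar\lambda)\in\mathrm{gph}\,\partial g$, and write $K=K_g(\bar z,\bar\lambda)$. Then: (a) $\mathrm{gph}\, D(\partial g)(\bar z,\bar\lambda)=T_{\mathrm{gph}\,\partial g}(\bar z,\bar\lambda)=\mathrm{gph}\, N_K$; (b) $\mathrm{gph}\, D_*(\partial g)(\bar z,\bar\lambda)=\mathrm{gph}\, N_K-\mathrm{gph}\, N_K$; (c) $\bar\lambda\in\mathrm{ri}\,\partial g(\bar z)$ if and only if there exists a neighborhood $O$ of $(\bar z,\bar\lambda)$ such that for every $(z,\lambda)\in O\cap\mathrm{gph}\,\partial g$, the mapping $\partial g$ is strictly proto-differentiable at $z$ for $\lambda$ and $D_*(\partial g)(z,\lambda)=D(\partial g)(z,\lambda)$.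
   Context: A proper function $g:\mathbb{R}^m\to\overline{\mathbb{R}}$ is polyhedral if its epigraph is a polyhedral convex set; $\partial g$ is the convex-analysis subdifferential; $\mathrm{ri}$ is relative interior. For $z$ with $g(z)$ finite, ${\rm d} g(z)(w)=\liminf_{t\searrow 0,\,w'\to w}\frac{g(z+tw')-g(z)}{t}$ and for $\lambda\in\partial g(z)$ the critical cone is $K_g(z,\lambda)=\{w\mid\langle\lambda,w\rangle={\rm d} g(z)(w)\}$. $N_K$ is the convex-analysis normal cone mapping of the convex cone $K$. Set limits are in the Painlevé–Kuratowski sense. For a set $\Omega$ and $\bar x\in\Omega$, the tangent cone is $T_\Omega(\bar x)=\limsup_{t\searrow0}(\Omega-\bar x)/t$. For a set-valued map $F:\mathbb{R}^n\rightrightarrows\mathbb{R}^m$ and $(\bar x,\bar y)\in\mathrm{gph}\, F$: the graphical derivative $DF(\bar x,\bar y)$ has graph $T_{\mathrm{gph}\, F}(\bar x,\bar y)$; the strict graphical derivative $D_*F(\bar x,\bar y)$ has graph $\limsup_{t\searrow0,\,(x,y)\to(\bar x,\bar y),\,(x,y)\in\mathrm{gph}\, F}\frac{\mathrm{gph}\, F-(x,y)}{t}$; $F$ is strictly proto-differentiable at $\bar x$ for $\bar y$ if this outer limit is actually a full limit (i.e., equals the corresponding inner limit). *)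

(* Defs.v *)
From HB Require Import structures.
From mathcomp Require Import all_boot all_order all_algebra.
From mathcomp Require Import all_classical all_reals.
From mathcomp Require Import ereal.
Set Implicit Arguments. Unset Strict Implicit. Unset Printing Implicit Defensive.
Import Order.TTheory GRing.Theory Num.Theory.
Local Open Scope classical_set_scope.
Local Open Scope ring_scope.

Definition dotv {R : realType} {m : nat} (u v : 'rV[R]_m) : R :=
  \sum_(i < m) u ord0 i * v ord0 i.

(* sup norm on R^m (all norms are equivalent: limits/neighborhoods do not depend on it) *)
Definition nrmv {R : realType} {m : nat} (u : 'rV[R]_m) : R :=
  \big[Num.max/0]_(i < m) `|u ord0 i|.

Definition psub {R : realType} {m : nat} (p q : 'rV[R]_m * 'rV[R]_m) :=
  (p.1 - q.1, p.2 - q.2).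
Definition pscale {R : realType} {m : nat} (t : R) (p : 'rV[R]_m * 'rV[R]_m) :=
  (t *: p.1, t *: p.2).
Definition pdist {R : realType} {m : nat} (p q : 'rV[R]_m * 'rV[R]_m) : R :=
  Num.max (nrmv (p.1 - q.1)) (nrmv (p.2 - q.2)).

Definition proper_fun {R : realType} {m : nat} (g : 'rV[R]_m -> \bar R) :=
  (forall x, g x <> -oo%E) /\ (exists x, g x <> +oo%E).

Definition epigraph {R : realType} {m : nat} (g : 'rV[R]_m -> \bar R)
  : set ('rV[R]_m * R) := [set p | (g p.1 <= p.2%:E)%E].

Definition polyhedral_set {R : realType} {m : nat} (S : set ('rV[R]_m * R)) :=
  exists (k : nat) (a : 'I_k -> 'rV[R]_m) (b c : 'I_k -> R),
    S = [set p | forall i, dotv (a i) p.1 + b i * p.2 <= c i].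

Definition polyhedral_fun {R : realType} {m : nat} (g : 'rV[R]_m -> \bar R) :=
  proper_fun g /\ polyhedral_set (epigraph g).

Definition subdiff {R : realType} {m : nat} (g : 'rV[R]_m -> \bar R) (z : 'rV[R]_m)
  : set 'rV[R]_m :=
  [set l | g z \is a fin_num /\ forall x, (g z + (dotv l (x - z))%:E <= g x)%E].

Definition gph_subdiff {R : realType} {m : nat} (g : 'rV[R]_m -> \bar R)
  : set ('rV[R]_m * 'rV[R]_m) := [set p | subdiff g p.1 p.2].

(* subderivative dg(z)(w) = liminf_{t \searrow 0, w' -> w} (g(z+tw') - g(z))/t *)
Definition subderiv {R : realType} {m : nat} (g : 'rV[R]_m -> \bar R) (z w : 'rV[R]_m)
  : \bar R :=
  ereal_sup [set ereal_inf
      [set ((g (z + q.1 *: q.2)%R - g z) * (q.1^-1)%:E)%E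
        | q in [set q : R * 'rV[R]_m | 0 < q.1 < e /\ nrmv (q.2 - w) < e]]
    | e in [set e : R | 0 < e]].

Definition critical_cone {R : realType} {m : nat} (g : 'rV[R]_m -> \bar R) (z l : 'rV[R]_m)
  : set 'rV[R]_m := [set w | (dotv l w)%:E = subderiv g z w].

Definition gph_normal_cone {R : realType} {m : nat} (K : set 'rV[R]_m)
  : set ('rV[R]_m * 'rV[R]_m) :=
  [set p | K p.1 /\ forall w, K w -> dotv p.2 (w - p.1) <= 0].

Definition mdiff {R : realType} {m : nat} (A B : set ('rV[R]_m * 'rV[R]_m))
  : set ('rV[R]_m * 'rV[R]_m) :=
  [set v | exists a b, A a /\ B b /\ v = psub a b].

(* tangent cone T_S(pb) = Painleve-Kuratowski outer limit of (S - pb)/t, t \searrow 0 *)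
Definition tangent_cone {R : realType} {m : nat} (S : set ('rV[R]_m * 'rV[R]_m))
  (pb : 'rV[R]_m * 'rV[R]_m) : set ('rV[R]_m * 'rV[R]_m) :=
  [set v | forall e d : R, 0 < e -> 0 < d ->
     exists (t : R) q, 0 < t < d /\ S q /\ pdist (pscale t^-1 (psub q pb)) v < e].

(* graph of the graphical derivative DF(xb,yb), for S = gph F *)
Definition gph_gderiv {R : realType} {m : nat} (S : set ('rV[R]_m * 'rV[R]_m))
  (pb : 'rV[R]_m * 'rV[R]_m) := tangent_cone S pb.

(* graph of the strict graphical derivative D_*F(xb,yb), for S = gph F:
   outer limit of (S - q)/t as t \searrow 0, q -> pb, q in S *)
Definition gph_sgderiv {R : realType} {m : nat} (S : set ('rV[R]_m * 'rV[R]_m))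
  (pb : 'rV[R]_m * 'rV[R]_m) : set ('rV[R]_m * 'rV[R]_m) :=
  [set v | forall e d : R, 0 < e -> 0 < d ->
     exists (t : R) q q', 0 < t < d /\ S q /\ pdist q pb < d /\ S q' /\
       pdist (pscale t^-1 (psub q' q)) v < e].

(* corresponding inner limit *)
Definition gph_sgderiv_inner {R : realType} {m : nat} (S : set ('rV[R]_m * 'rV[R]_m))
  (pb : 'rV[R]_m * 'rV[R]_m) : set ('rV[R]_m * 'rV[R]_m) :=
  [set v | forall e : R, 0 < e -> exists d : R, 0 < d /\
     forall (t : R) q, 0 < t < d -> S q -> pdist q pb < d ->
       exists q', S q' /\ pdist (pscale t^-1 (psub q' q)) v < e].

Definition strictly_proto_diff {R : realType} {m : nat} (S : set ('rV[R]_m * 'rV[R]_m))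
  (pb : 'rV[R]_m * 'rV[R]_m) := gph_sgderiv S pb = gph_sgderiv_inner S pb.

Definition aff_hull {R : realType} {m : nat} (C : set 'rV[R]_m) : set 'rV[R]_m :=
  [set x | exists (n : nat) (pts : 'I_n -> 'rV[R]_m) (mu : 'I_n -> R),
     (forall i, C (pts i)) /\ \sum_(i < n) mu i = 1 /\ x = \sum_(i < n) mu i *: pts i].

Definition rel_int {R : realType} {m : nat} (C : set 'rV[R]_m) : set 'rV[R]_m :=
  [set x | C x /\ exists e : R, 0 < e /\
     forall y, aff_hull C y -> nrmv (y - x) < e -> C y].

(* Main.v *)
Require Import Defs.
From HB Require Import structures.
From mathcomp Require Import all_boot all_order all_algebra.
From mathcomp Require Import all_classical all_reals.
From mathcomp Require Import ereal.
From mathcomp Require Import ring lra.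
Import Order.TTheory GRing.Theory Num.Theory.
Local Open Scope classical_set_scope.
Local Open Scope ring_scope.
Set Implicit Arguments. Unset Strict Implicit. Unset Printing Implicit Defensive.

Section Vec.
Variables (R : realType) (m : nat).
Implicit Types (u v w x y : 'rV[R]_m) (a b c : R).

Lemma dotvC u v : dotv u v = dotv v u.
Proof. by apply: eq_bigr => i _; rewrite mulrC. Qed.

Lemma dotvDl u v w : dotv (u + v) w = dotv u w + dotv v w.
Proof. rewrite /dotv -big_split; apply: eq_bigr => i _; by rewrite !mxE mulrDl. Qed.

Lemma dotvDr u v w : dotv w (u + v) = dotv w u + dotv w v.
Proof. by rewrite dotvC dotvDl !(dotvC w). Qed.

Lemma dotvZl a u v : dotv (a *: u) v = a * dotv u v.
Proof. rewrite /dotv mulr_sumr; apply: eq_bigr => i _; by rewrite !mxE mulrA. Qed.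

Lemma dotvZr a u v : dotv v (a *: u) = a * dotv v u.
Proof. by rewrite dotvC dotvZl dotvC. Qed.

Lemma dotv0l v : dotv 0 v = 0.
Proof. by rewrite -(scale0r 0) dotvZl mul0r. Qed.

Lemma dotv0r v : dotv v 0 = 0.
Proof. by rewrite dotvC dotv0l. Qed.

Lemma dotvNl u v : dotv (- u) v = - dotv u v.
Proof. by rewrite -scaleN1r dotvZl mulN1r. Qed.

Lemma dotvNr u v : dotv v (- u) = - dotv v u.
Proof. by rewrite dotvC dotvNl dotvC. Qed.

Lemma dotvBl u v w : dotv (u - v) w = dotv u w - dotv v w.
Proof. by rewrite dotvDl dotvNl. Qed.

Lemma dotvBr u v w : dotv w (u - v) = dotv w u - dotv w v.
Proof. by rewrite dotvDr dotvNr. Qed.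

Lemma dotv_suml (I : finType) (P : pred I) (F : I -> 'rV[R]_m) v :
  dotv (\sum_(i | P i) F i) v = \sum_(i | P i) dotv (F i) v.
Proof. by rewrite (big_morph (fun u => dotv u v) (fun x1 x2 => dotvDl x1 x2 v) (dotv0l v)). Qed.

Lemma dotv_sumr (I : finType) (P : pred I) (F : I -> 'rV[R]_m) v :
  dotv v (\sum_(i | P i) F i) = \sum_(i | P i) dotv v (F i).
Proof. rewrite dotvC dotv_suml; apply: eq_bigr => i _; exact: dotvC. Qed.

Definition L1 y := \sum_(i < m) `|y ord0 i|.

Lemma L1_ge0 y : 0 <= L1 y.
Proof. by apply: sumr_ge0 => i _. Qed.

Lemma nrmv_ge0 u : 0 <= nrmv u.
Proof.
rewrite /nrmv; elim/big_ind: _ => //.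
by move=> x1 x2 h1 h2; rewrite le_max h1.
Qed.

Lemma coord_le_nrmv u i : `|u ord0 i| <= nrmv u.
Proof. exact: le_bigmax. Qed.

Lemma nrmv_le u c : 0 <= c -> (forall i, `|u ord0 i| <= c) -> nrmv u <= c.
Proof. by move=> c0 h; apply: bigmax_le. Qed.

Lemma nrmv_lt u c : 0 < c -> (forall i, `|u ord0 i| < c) -> nrmv u < c.
Proof.
move=> c0 h; rewrite /nrmv; elim/big_ind: _ => //.
by move=> x1 x2 h1 h2; rewrite gt_max h1 h2.
Qed.

Lemma nrmv0 : nrmv (0 : 'rV[R]_m) = 0.
Proof.
apply/eqP; rewrite eq_le nrmv_ge0 andbT; apply: nrmv_le => // i.
by rewrite mxE normr0.
Qed.

Lemma nrmvD u v : nrmv (u + v) <= nrmv u + nrmv v.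
Proof.
apply: nrmv_le; first by rewrite addr_ge0 // nrmv_ge0.
move=> i; rewrite mxE; apply: (le_trans (ler_normD _ _)).
by apply: lerD; apply: coord_le_nrmv.
Qed.

Lemma nrmvZ_le a u : nrmv (a *: u) <= `|a| * nrmv u.
Proof.
apply: nrmv_le; first by rewrite mulr_ge0 // nrmv_ge0.
move=> i; rewrite mxE normrM; apply: ler_wpM2l => //; exact: coord_le_nrmv.
Qed.

Lemma nrmvZ a u : nrmv (a *: u) = `|a| * nrmv u.
Proof.
apply/eqP; rewrite eq_le nrmvZ_le /=.
have [->|a0] := eqVneq a 0; first by rewrite normr0 mul0r nrmv_ge0.
have := nrmvZ_le a^-1 (a *: u); rewrite scalerA mulVf // scale1r => h.
rewrite -ler_pdivlMl ?normr_gt0 //; by rewrite -normfV.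
Qed.

Lemma nrmvN u : nrmv (- u) = nrmv u.
Proof. by rewrite -scaleN1r nrmvZ normrN1 mul1r. Qed.

Lemma nrmvB u v : nrmv (u - v) = nrmv (v - u).
Proof. by rewrite -nrmvN opprB. Qed.

Lemma nrmv_eq0 u : nrmv u = 0 -> u = 0.
Proof.
move=> h; apply/rowP => i; rewrite mxE; apply/eqP; rewrite -normr_eq0.
by rewrite eq_le normr_ge0 andbT -h coord_le_nrmv.
Qed.

Lemma dotv_bound y x : `|dotv y x| <= L1 y * nrmv x.
Proof.
rewrite /dotv /L1 mulr_suml; apply: (le_trans (ler_norm_sum _ _ _)).
apply: ler_sum => i _; rewrite normrM; apply: ler_wpM2l => //; exact: coord_le_nrmv.
Qed.

Lemma L1_bound y : L1 y <= m%:R * nrmv y.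
Proof.
rewrite /L1 mulr_natl -[m in _ *+ m]card_ord -sumr_const; apply: ler_sum => i _; exact: coord_le_nrmv.
Qed.

Lemma L1_sum (I : finType) (P : pred I) (F : I -> 'rV[R]_m) :
  L1 (\sum_(i | P i) F i) <= \sum_(i | P i) L1 (F i).
Proof.
rewrite /L1 exchange_big /=; apply: ler_sum => j _.
rewrite summxE; exact: ler_norm_sum.
Qed.

Lemma L1Z a y : L1 (a *: y) = `|a| * L1 y.
Proof. rewrite /L1 mulr_sumr; apply: eq_bigr => i _; by rewrite mxE normrM. Qed.

Lemma L1D u v : L1 (u + v) <= L1 u + L1 v.
Proof. rewrite /L1 -big_split; apply: ler_sum => i _; rewrite mxE; exact: ler_normD. Qed.

Lemma linear_dotv (F : 'rV[R]_m -> R) :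
  (forall u v, F (u + v) = F u + F v) -> (forall a u, F (a *: u) = a * F u) ->
  exists y, forall x, F x = dotv y x.
Proof.
move=> FD FZ; exists (\row_j F 'e_j) => x.
rewrite {1}(row_sum_delta x).
have F0 : F 0 = 0 by rewrite -(scale0r 0) FZ mul0r.
rewrite (big_morph F FD F0) /dotv; apply: eq_bigr => j _.
by rewrite FZ mxE mulrC.
Qed.

End Vec.

Section Pairs.
Variables (R : realType) (m : nat).
Implicit Types (p q r : 'rV[R]_m * 'rV[R]_m).

Lemma pdist_ge0 p q : 0 <= pdist p q.
Proof. by rewrite le_max nrmv_ge0. Qed.

Lemma pdistC p q : pdist p q = pdist q p.
Proof. by rewrite /pdist nrmvB (nrmvB p.2). Qed.

Lemma pdist_tri p q r : pdist p r <= pdist p q + pdist q r.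
Proof.
rewrite /pdist ge_max; apply/andP; split.
- have -> : p.1 - r.1 = (p.1 - q.1) + (q.1 - r.1) by rewrite addrA subrK.
  apply: (le_trans (nrmvD _ _)); apply: lerD; rewrite le_max lexx //.
- have -> : p.2 - r.2 = (p.2 - q.2) + (q.2 - r.2) by rewrite addrA subrK.
  apply: (le_trans (nrmvD _ _)); apply: lerD; rewrite le_max lexx ?orbT //.
Qed.

Lemma pdist_lt p q c : (pdist p q < c) <-> (nrmv (p.1 - q.1) < c /\ nrmv (p.2 - q.2) < c).
Proof. by rewrite /pdist gt_max; split => [/andP[]|[-> ->]]. Qed.

Lemma pdist_le1 p q : nrmv (p.1 - q.1) <= pdist p q.
Proof. by rewrite le_max lexx. Qed.
Lemma pdist_le2 p q : nrmv (p.2 - q.2) <= pdist p q.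
Proof. by rewrite le_max lexx orbT. Qed.

Lemma pdist_sub p q : pdist p q = pdist (psub p q) (0, 0).
Proof. by rewrite /pdist /psub /= !subr0. Qed.

Lemma pdist_refl p : pdist p p = 0.
Proof. by rewrite /pdist !subrr nrmv0 maxxx. Qed.

Lemma pdist_scale t p q : 0 < t -> pdist (pscale t p) (pscale t q) = t * pdist p q.
Proof.
move=> t0; rewrite /pdist /pscale /= -!scalerBr !nrmvZ gtr0_norm //.
by rewrite maxr_pMr // ltW.
Qed.

End Pairs.

Section FM.
Variable R : realType.

Lemma sum_pick (I : finType) (k : I) (F : I -> R) :
  \sum_l (l == k)%:R * F l = F k.
Proof.
rewrite (bigD1 k) //= eqxx mul1r big1 ?addr0 // => l /negbTE ->; by rewrite mul0r.
Qed.

Lemma lo_up (fk fi bi bk : R) : 0 < bi -> bk < 0 ->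
  bi * fk - bk * fi <= 0 -> - fk / bk <= - fi / bi.
Proof.
move=> bi0 bk0 h; rewrite -subr_le0.
have -> : - fk / bk - - fi / bi = (bi * fk - bk * fi) * (- (bk * bi))^-1.
  by field; rewrite gt_eqF // lt_eqF.
apply: mulr_le0_ge0 => //; rewrite invr_ge0 oppr_ge0; apply: mulr_le0_ge0; exact: ltW.
Qed.

Lemma FM1 (X : Type) (I : finType) (f : I -> X -> R) (b : I -> R) :
  exists (I' : finType) (C : I' -> I -> R), (forall j i, 0 <= C j i) /\
    forall x, (exists y : R, forall i, f i x + b i * y <= 0) <->
              (forall j, \sum_i C j i * f i x <= 0).
Proof.
pose C (j : ((I * I) + I)%type) (l : I) : R :=
  match j with
  | inl (i, k) => if (0 < b i) && (b k < 0) then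
                     b i * (l == k)%:R - b k * (l == i)%:R else 0
  | inr l' => if b l' == 0 then (l == l')%:R else 0
  end.
exists ((I * I) + I)%type, C; split.
  case=> [[i k]|l'] l /=.
  - case: ifP => // /andP[bi bk].
    apply: addr_ge0; first by apply: mulr_ge0; [exact: ltW|case: (_ == _)].
    rewrite -mulNr; apply: mulr_ge0; [by rewrite oppr_ge0 ltW|by case: (_ == _)].
  - by case: ifP => // _; case: (_ == _).
move=> x; split.
  move=> [y hy] [[i k]|l'] /=.
  - case: (boolP ((0 < b i) && (b k < 0))) => [/andP[bi bk]|_]; last by rewrite big1 // => l _; rewrite mul0r.
    under eq_bigr => l _ do rewrite mulrBl -[b i * _ * _]mulrA -[b k * _ * _]mulrA.
    rewrite sumrB -!mulr_sumr !sum_pick.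
    have h1 := hy i; have h2 := hy k.
    nra.
  - case: (boolP (b l' == 0)) => [/eqP bl|_]; last by rewrite big1 // => l _; rewrite mul0r.
    rewrite sum_pick; have := hy l'; rewrite bl mul0r addr0 //.
move=> h.
pose lo k := - f k x / b k.
pose m0 := \big[Num.min/0]_(i | 0 < b i) lo i.
pose y := \big[Num.max/m0]_(k | b k < 0) lo k.
have hpair i k : 0 < b i -> b k < 0 -> lo k <= lo i.
  move=> bi bk; apply: lo_up => //.
  have := h (inl (i, k)); rewrite /= bi bk /=.
  under eq_bigr => l _ do rewrite mulrBl -[b i * _ * _]mulrA -[b k * _ * _]mulrA.
  by rewrite sumrB -!mulr_sumr !sum_pick.
have ylo k : b k < 0 -> lo k <= y by move=> bk; apply: le_bigmax_cond.
have yup i : 0 < b i -> y <= lo i.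
  move=> bi; apply: bigmax_le; first exact: bigmin_le_cond.
  by move=> k bk; apply: hpair.
exists y => l.
have [bl|bl|bl] := ltgtP (b l) 0.
- have hl := ylo l bl.
  have e : lo l * b l = - f l x by rewrite /lo mulrVK // unitfE lt_eqF.
  nra.
- have hl := yup l bl.
  have e : lo l * b l = - f l x by rewrite /lo mulrVK // unitfE gt_eqF.
  nra.
- have := h (inr l); rewrite /= bl eqxx sum_pick => hl.
  by rewrite mul0r addr0.
Qed.


Lemma FMn (X : Type) n (I : finType) (f : I -> X -> R) (B : I -> 'I_n -> R) :
  exists (I' : finType) (C : I' -> I -> R), (forall j i, 0 <= C j i) /\
    forall x, (exists y : 'I_n -> R, forall i, f i x + \sum_l B i l * y l <= 0) <->
              (forall j, \sum_i C j i * f i x <= 0).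
Proof.
elim: n I f B => [|n IH] I f B.
  exists I, (fun j i => (i == j)%:R); split; first by move=> j i; case: (_ == _).
  move=> x; split.
    by move=> [y hy] j; rewrite sum_pick; have := hy j; rewrite big_ord0 addr0.
  move=> h; exists (fun _ => 0) => i; rewrite big_ord0 addr0.
  by have := h i; rewrite sum_pick.
pose f' i (p : X * ('I_n -> R)) := f i p.1 + \sum_(l < n) B i (widen_ord (leqnSn n) l) * p.2 l.
have [I1 [C1 [C1ge h1]]] := FM1 f' (fun i => B i ord_max).
pose f'' j x := \sum_i C1 j i * f i x.
pose B'' j (l : 'I_n) := \sum_i C1 j i * B i (widen_ord (leqnSn n) l).
have [I2 [C2 [C2ge h2]]] := IH I1 f'' B''.
exists I2, (fun j i => \sum_j1 C2 j j1 * C1 j1 i); split.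
  by move=> j i; apply: sumr_ge0 => j1 _; apply: mulr_ge0.
move=> x.
have eqC j : \sum_i (\sum_j1 C2 j j1 * C1 j1 i) * f i x = \sum_j1 C2 j j1 * f'' j1 x.
  rewrite /f''; under eq_bigr => i _ do rewrite mulr_suml.
  rewrite exchange_big /=; apply: eq_bigr => j1 _; rewrite mulr_sumr.
  by apply: eq_bigr => i _; rewrite mulrA.
have eq1 y j1 : \sum_i C1 j1 i * f' i (x, y) = f'' j1 x + \sum_l B'' j1 l * y l.
  rewrite /f' /f'' /B'' /=; under eq_bigr => i _ do rewrite mulrDr.
  rewrite big_split /=; congr (_ + _).
  under eq_bigr => i _ do rewrite mulr_sumr.
  rewrite exchange_big /=; apply: eq_bigr => l _; rewrite mulr_suml.
  by apply: eq_bigr => i _; rewrite mulrA.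
split.
  move=> [y hy] j; rewrite eqC; move: j; apply/(h2 x).
  exists (fun l => y (widen_ord (leqnSn n) l)) => j1; rewrite -eq1; move: j1.
  apply/(h1 (x, fun l => y (widen_ord (leqnSn n) l))).
  by exists (y ord_max) => i; have := hy i; rewrite big_ord_recr /= addrA.
move=> h; have [y' hy'] : exists y : 'I_n -> R, forall j1, f'' j1 x + \sum_l B'' j1 l * y l <= 0.
  by apply/h2 => j; rewrite -eqC.
have [r hr] : exists r : R, forall i, f' i (x, y') + B i ord_max * r <= 0.
  by apply/h1 => j1; rewrite eq1.
exists (fun l : 'I_n.+1 => oapp y' r (insub (val l) : option 'I_n)) => i.
rewrite big_ord_recr /= addrA.
have -> : insub (val (@ord_max n)) = None :> option 'I_n by rewrite insubN // ltnn.
have := hr i; rewrite /f' /= => hi; apply: le_trans hi; rewrite le_eqVlt; apply/orP; left; apply/eqP.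
congr (_ + _ + _); apply: eq_bigr => l _; congr (_ * _).
by rewrite (_ : insub _ = Some l) // -[X in insub X]/(val l) valK.
Qed.

Lemma FMJ (X : Type) (J I : finType) (f : I -> X -> R) (B : I -> J -> R) :
  exists (I' : finType) (C : I' -> I -> R), (forall j i, 0 <= C j i) /\
    forall x, (exists y : J -> R, forall i, f i x + \sum_l B i l * y l <= 0) <->
              (forall j, \sum_i C j i * f i x <= 0).
Proof.
have [I' [C [Cge h]]] := FMn f (fun i k => B i (enum_val (k : 'I_#|J|))).
exists I', C; split => // x; rewrite -h; split.
  move=> [y hy]; exists (fun k => y (enum_val k)) => i.
  by have := hy i; rewrite (big_enum_val (A := predT)) /=.
move=> [y hy]; exists (fun l => y (enum_rank l)) => i.
rewrite (big_enum_val (A := predT)) /=.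
have := hy i; under [X in _ + X <= _ -> _]eq_bigr => k _ do rewrite -[k in y k](enum_valK k).
by [].
Qed.

End FM.

Section Poly.
Variables (R : realType).

Lemma FM_class (X : Type) (L : (X -> R) -> Prop)
  (LD : forall f g, L f -> L g -> L (fun x => f x + g x))
  (LZ : forall c f, 0 <= c -> L f -> L (fun x => c * f x))
  (L0 : L (fun _ => 0))
  (J I : finType) (f : I -> X -> R) (B : I -> J -> R) :
  (forall i, L (f i)) ->
  exists (I' : finType) (F : I' -> X -> R), (forall j, L (F j)) /\
    forall x, (exists y : J -> R, forall i, f i x + \sum_l B i l * y l <= 0) <->
              (forall j, F j x <= 0).
Proof.
move=> Lf; have [I' [C [Cge h]]] := FMJ f B.
exists I', (fun j x => \sum_i C j i * f i x); split; last by [].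
move=> j.
have Lsum (s : seq I) : L (fun x => \sum_(i <- s) C j i * f i x).
  elim: s => [|i s IHs]; first by under [X in L X]funext => x do rewrite big_nil.
  under [X in L X]funext => x do rewrite big_cons.
  by apply: LD => //; apply: LZ.
by apply: Lsum.
Qed.

Variable m : nat.
Notation V := 'rV[R]_m.

Definition affv (f : V -> R) := exists y k, forall x, f x = dotv y x + k.

Lemma affvD f g : affv f -> affv g -> affv (fun x => f x + g x).
Proof.
move=> [y1 [k1 h1]] [y2 [k2 h2]]; exists (y1 + y2), (k1 + k2) => x.
rewrite h1 h2 dotvDl; lra.
Qed.

Lemma affvZ c f : affv f -> affv (fun x => c * f x).
Proof.
move=> [y [k h]]; exists (c *: y), (c * k) => x; rewrite h dotvZl; lra.
Qed.

Lemma affv0 : affv (fun _ => 0).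
Proof. by exists 0, 0 => x; rewrite dotv0l addr0. Qed.

Lemma FM_affv (J I : finType) (f : I -> V -> R) (B : I -> J -> R) :
  (forall i, affv (f i)) ->
  exists (I' : finType) (y : I' -> V) (k : I' -> R),
    forall x, (exists z : J -> R, forall i, f i x + \sum_l B i l * z l <= 0) <->
              (forall j, dotv (y j) x + k j <= 0).
Proof.
move=> Lf.
have [I' [F [LF h]]] := FM_class affvD (fun c f _ => @affvZ c f) affv0 B Lf.
have /all_sig[y hy] : forall j, {y | exists k, forall x, F j x = dotv y x + k}.
  by move=> j; apply: cid; apply: LF.
have /all_sig[k hk] : forall j, {k | forall x, F j x = dotv (y j) x + k}.
  by move=> j; apply: cid; apply: hy.
by exists I', y, k => x; rewrite h; split => H j; [rewrite -hk|rewrite hk].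
Qed.

Definition sgn (b : bool) : R := if b then 1 else -1.

Lemma eq_by_sgn (a b : R) : (forall s, sgn s * (a - b) <= 0) -> a = b.
Proof. move=> h; have := h true; have := h false; rewrite /sgn; lra. Qed.

Lemma sgn_le (a b : R) : a = b -> forall s, sgn s * (a - b) <= 0.
Proof. by move=> -> s; rewrite subrr mulr0. Qed.

Lemma eq_row_coord (u v : V) : (forall c, u ord0 c = v ord0 c) -> u = v.
Proof. by move=> h; apply/rowP => c; rewrite h. Qed.

Definition Mset (IA IJ : finType) (be : IA -> V) (a : IJ -> V) (v : V) :=
  exists (mu : IA -> R) (nu : IJ -> R), (forall i, 0 <= mu i) /\ (forall j, 0 <= nu j) /\
    \sum_i mu i = 1 /\ v = \sum_i mu i *: be i + \sum_j nu j *: a j.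

Lemma sum_row_coord (I : finType) (z : I -> R) (g : I -> V) c :
  (\sum_i z i *: g i) ord0 c = \sum_i z i * g i ord0 c.
Proof. rewrite summxE; apply: eq_bigr => i _; by rewrite mxE. Qed.

Lemma Mrep (IA IJ : finType) (be : IA -> V) (a : IJ -> V) :
  exists (I' : finType) (y : I' -> V) (k : I' -> R),
    forall v, Mset be a v <-> (forall j, dotv (y j) v + k j <= 0).
Proof.
pose J := (IA + IJ)%type.
pose coef (l : J) c := match l with inl i => be i ord0 c | inr j => a j ord0 c end.
pose I := ((J + bool) + ('I_m * bool))%type.
pose f (i : I) (v : V) : R := match i with
  | inl (inl l) => 0
  | inl (inr b) => - sgn b
  | inr (c, b) => sgn b * v ord0 c end.
pose B (i : I) (l : J) : R := match i with
  | inl (inl l') => - (l == l')%:R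
  | inl (inr b) => sgn b * (if l is inl _ then 1 else 0)
  | inr (c, b) => - sgn b * coef l c end.
have Lf : forall i, affv (f i).
  case=> [[l|b]|[c b]] /=; first exact: affv0.
  - by exists 0, (- sgn b) => x; rewrite dotv0l add0r.
  - exists (sgn b *: 'e_c), 0 => x; rewrite addr0 dotvZl; congr (_ * _).
    by rewrite /dotv (bigD1 c) //= !mxE eqxx mul1r big1 ?addr0 // => l /negbTE hl; rewrite !mxE hl mul0r.
have [I' [y [k h]]] := FM_affv B Lf.
exists I', y, k => v; rewrite -h; split.
  move=> [mu [nu [mu0 [nu0 [s1 ->]]]]].
  exists (fun l => match l with inl i => mu i | inr j => nu j end).
  case=> [[l|b]|[c b]] /=.
  - under eq_bigr => l' _ do rewrite mulNr.
    rewrite sumrN sum_pick add0r oppr_le0; by case: l.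
  - rewrite big_sumType /= [X in _ + (_ + X)]big1 ?addr0; last by move=> j _; rewrite mulr0 mul0r.
    under eq_bigr => i _ do rewrite mulr1.
    by rewrite -mulr_sumr s1 mulr1 addNr.
  - rewrite big_sumType /= mxE !sum_row_coord /coef /=.
    have e1 : \sum_i - sgn b * be i ord0 c * mu i = - sgn b * \sum_i mu i * be i ord0 c.
      by rewrite mulr_sumr; apply: eq_bigr => i _ /=; ring.
    have e2 : \sum_j - sgn b * a j ord0 c * nu j = - sgn b * \sum_j nu j * a j ord0 c.
      by rewrite mulr_sumr; apply: eq_bigr => i _ /=; ring.
    rewrite e1 e2; lra.
move=> [z hz].
exists (fun i => z (inl i)), (fun j => z (inr j)); split; last split; last split.
- move=> i; have := hz (inl (inl (inl i))); rewrite /= add0r.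
  under eq_bigr => l _ do rewrite mulNr.
  by rewrite sumrN sum_pick oppr_le0.
- move=> j; have := hz (inl (inl (inr j))); rewrite /= add0r.
  under eq_bigr => l _ do rewrite mulNr.
  by rewrite sumrN sum_pick oppr_le0.
- apply: eq_by_sgn => b; have := hz (inl (inr b)); rewrite /= big_sumType /=.
  rewrite [X in _ + (_ + X) <= 0 -> _]big1 ?addr0; last by move=> j _; rewrite mulr0 mul0r.
  under eq_bigr => i _ do rewrite mulr1.
  rewrite -mulr_sumr; rewrite /sgn; case: b; lra.
- apply: eq_row_coord => c; apply: eq_by_sgn => b; have := hz (inr (c, b)).
  rewrite /= big_sumType /= mxE !sum_row_coord /coef /=.
  have e1 : \sum_i - sgn b * be i ord0 c * z (inl i) = - sgn b * \sum_i z (inl i) * be i ord0 c.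
    by rewrite mulr_sumr; apply: eq_bigr => i _ /=; ring.
  have e2 : \sum_j - sgn b * a j ord0 c * z (inr j) = - sgn b * \sum_j z (inr j) * a j ord0 c.
    by rewrite mulr_sumr; apply: eq_bigr => i _ /=; ring.
  rewrite e1 e2; lra.
Qed.


Lemma ray_le (a k : R) : (forall t, 0 <= t -> t * a + k <= 0) -> a <= 0.
Proof.
move=> h; have := h 0 (lexx 0); rewrite mul0r add0r => k0.
rewrite leNgt; apply/negP => a0.
have ht : 0 <= (1 - k) / a by apply: divr_ge0; [lra | exact: ltW].
have := h _ ht; rewrite mulfVK ?gt_eqF //; lra.
Qed.

Lemma sum_ind (I : finType) (k : I) : \sum_l (l == k)%:R = 1 :> R.
Proof. by rewrite (eq_bigr (fun l => (l == k)%:R * 1)) ?sum_pick // => l _; rewrite mulr1. Qed.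

Lemma sum_pickv (I : finType) (k : I) (F : I -> V) : \sum_l (l == k)%:R *: F l = F k.
Proof.
rewrite (bigD1 k) //= eqxx scale1r big1 ?addr0 // => l /negbTE ->; by rewrite scale0r.
Qed.

Lemma Mset_pt (IA IJ : finType) (be : IA -> V) (a : IJ -> V) i l t : 0 <= t ->
  Mset be a (be i + t *: a l).
Proof.
move=> t0; exists (fun i' => (i' == i)%:R), (fun l' => t * (l' == l)%:R).
split; first by move=> i'; case: (_ == _).
split; first by move=> l'; apply: mulr_ge0 => //; case: (_ == _).
split; first exact: sum_ind.
rewrite sum_pickv; congr (_ + _).
under eq_bigr => l' _ do rewrite -scalerA.
by rewrite -scaler_sumr sum_pickv.
Qed.

Lemma farkas_M (IA IJ : finType) (be : IA -> V) (a : IJ -> V) v :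
  (forall y k, (forall i, dotv (be i) y + k <= 0) -> (forall j, dotv (a j) y <= 0) ->
     dotv v y + k <= 0) ->
  Mset be a v.
Proof.
move=> hv; have [I' [y [k h]]] := Mrep be a; apply/h => j.
case: (pickP (@predT IA)) => [i0 _|none].
- rewrite dotvC; apply: hv => [i|l].
  + have /h/(_ j) : Mset be a (be i).
      exists (fun i' => (i' == i)%:R), (fun _ => 0).
      split; first by move=> i'; case: (_ == _).
      split; first by [].
      split; first exact: sum_ind.
      by rewrite sum_pickv big1 ?addr0 // => l _; rewrite scale0r.
    by rewrite dotvC.
  + apply: (@ray_le _ (dotv (y j) (be i0) + k j)) => t t0.
    have /h/(_ j) := Mset_pt be a i0 l t0.
    rewrite dotvDr dotvZr (dotvC (y j) (a l)); lra.
- have := hv 0 1 (fun i => ltac:(by have := none i)) (fun l => ltac:(by rewrite dotv0r)).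
  by rewrite dotv0r add0r ler10.
Qed.


Definition Cone (I : finType) (u : I -> V) (v : V) :=
  exists nu : I -> R, (forall i, 0 <= nu i) /\ v = \sum_i nu i *: u i.

Lemma Cone_M (I : finType) (u : I -> V) v : Cone u v <-> Mset (fun _ : unit => 0) u v.
Proof.
split.
  move=> [nu [nu0 ->]]; exists (fun _ => 1), nu; split => //; split => //; split.
    by rewrite big_const card_unit /= addr0.
  by rewrite [X in _ = X + _]big1 ?add0r // => i _; rewrite scaler0.
move=> [mu [nu [_ [nu0 [_ ->]]]]]; exists nu; split => //.
by rewrite [X in X + _ = _]big1 ?add0r // => i _; rewrite scaler0.
Qed.

Lemma farkas_cone (I : finType) (u : I -> V) v :
  (forall y, (forall i, dotv (u i) y <= 0) -> dotv v y <= 0) -> Cone u v.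
Proof.
move=> hv; apply/Cone_M; apply: farkas_M => y k hk hu.
have := hk tt; rewrite dotv0l add0r => k0.
have := hv y hu; clear hk hv hu; lra.
Qed.

Lemma Cone0 (I : finType) (u : I -> V) : Cone u 0.
Proof. by exists (fun _ => 0); split => //; rewrite big1 // => i _; rewrite scale0r. Qed.

Lemma ConeZ (I : finType) (u : I -> V) t v : 0 <= t -> Cone u v -> Cone u (t *: v).
Proof.
move=> t0 [nu [nu0 ->]]; exists (fun i => t * nu i); split.
  by move=> i; apply: mulr_ge0.
by rewrite scaler_sumr; apply: eq_bigr => i _; rewrite scalerA.
Qed.

Lemma Cone_gen (I : finType) (u : I -> V) i : Cone u (u i).
Proof.
exists (fun i' => (i' == i)%:R); split; first by move=> i'; case: (_ == _).
by rewrite sum_pickv.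
Qed.

Lemma Cone_dot (I : finType) (u : I -> V) y v :
  (forall i, dotv (u i) y <= 0) -> Cone u v -> dotv v y <= 0.
Proof.
move=> hu [nu [nu0 ->]]; rewrite dotv_suml; apply: sumr_le0 => i _.
by rewrite dotvZl; apply: mulr_ge0_le0.
Qed.

Lemma minkowski (I : finType) (d : I -> V) : exists (I' : finType) (u : I' -> V),
  forall w, (forall i, dotv (d i) w <= 0) <-> Cone u w.
Proof.
have [I' [y [k h]]] := Mrep (fun _ : unit => 0) d.
have hC v : Cone d v <-> forall j, dotv (y j) v + k j <= 0.
  by rewrite Cone_M h.
have k0 j : k j <= 0 by have := (hC 0).1 (Cone0 d) j; rewrite dotv0r add0r.
have yd j i : dotv (d i) (y j) <= 0.
  rewrite dotvC; apply: (@ray_le _ (k j)) => t t0.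
  by have := (hC _).1 (ConeZ t0 (Cone_gen d i)) j; rewrite dotvZr.
exists I', y => w; split.
  move=> hw; apply: farkas_cone => z hz.
  have : Cone d z by apply/hC => j; have := hz j; rewrite dotvC; have := k0 j; lra.
  move=> [nu [nu0 ->]]; rewrite dotv_sumr; apply: sumr_le0 => i _.
  by rewrite dotvZr; apply: mulr_ge0_le0 => //; rewrite dotvC.
move=> [nu [nu0 ->]] i; rewrite dotv_sumr; apply: sumr_le0 => j _.
by rewrite dotvZr; apply: mulr_ge0_le0.
Qed.

Definition closedv (S : set V) :=
  forall v, (forall e, 0 < e -> exists u, S u /\ nrmv (u - v) < e) -> S v.

Lemma dotv_near (y u v : V) : dotv y u <= dotv y v + L1 y * nrmv (u - v).
Proof.
have := dotv_bound y (u - v); rewrite dotvBr => h.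
have := ler_norm (dotv y u - dotv y v); lra.
Qed.

Lemma closed_halfspaces (P : V -> Prop) :
  closedv [set v | forall y, P y -> dotv v y <= 0].
Proof.
move=> v hv y Py; rewrite leNgt; apply/negP => pos.
have Lp1 : 0 < L1 y + 1 by have := L1_ge0 y; lra.
have [u [Su hu]] := hv (dotv v y / (L1 y + 1)) (divr_gt0 pos Lp1).
have := Su y Py; rewrite dotvC => hu'.
have := dotv_near y v u; rewrite nrmvB => h.
have Lp : 0 <= L1 y := L1_ge0 y.
have : L1 y * nrmv (u - v) <= L1 y * (dotv v y / (L1 y + 1)).
  by apply: ler_wpM2l => //; exact: ltW.
have : L1 y * (dotv v y / (L1 y + 1)) < dotv v y.
  rewrite mulrA ltr_pdivrMr; last lra.
  nra.
rewrite (dotvC y v) in h; lra.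
Qed.

Lemma Cone_closed (I : finType) (u : I -> V) : closedv (Cone u).
Proof.
move=> v hv; apply: farkas_cone => y hy.
have H := @closed_halfspaces (fun y : V => forall i : I, dotv (u i) y <= 0).
apply: (H v _ y hy) => e e0; have [w [Cw hw]] := hv e e0; exists w; split => //.
by move=> y' hy'; apply: Cone_dot Cw.
Qed.

Lemma loc_cone (I : finType) (y : I -> V) (k : I -> R) :
  (forall j, k j <= 0) ->
  exists2 eps, 0 < eps & forall v, nrmv v < eps -> forall s, 0 < s ->
    (forall j, dotv (y j) (s *: v) + k j <= 0) -> forall j, dotv (y j) v + k j <= 0.
Proof.
move=> k0.
exists (\big[Num.min/1]_(j | k j < 0) (- k j / (L1 (y j) + 1))).
  apply: lt_bigmin => // j kj; apply: divr_gt0; first lra.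
  have := L1_ge0 (y j); lra.
move=> v hv s s0 hs j.
have [kj|kj] := ltP (k j) 0; last first.
  have -> : k j = 0 by apply/eqP; rewrite eq_le k0.
  have := hs j; rewrite dotvZr (_ : k j = 0); last by apply/eqP; rewrite eq_le k0.
  rewrite !addr0 => h; rewrite leNgt; apply/negP => p; have := mulr_gt0 s0 p; lra.
have hle : \big[Num.min/1]_(j | k j < 0) (- k j / (L1 (y j) + 1)) <= - k j / (L1 (y j) + 1).
  by apply: (@bigmin_le_cond _ _ _ _ _ (fun j => k j < 0) (fun j => - k j / (L1 (y j) + 1))).
have Lp := L1_ge0 (y j).
have h1 : dotv (y j) v <= L1 (y j) * nrmv v.
  have := dotv_bound (y j) v; have := ler_norm (dotv (y j) v); lra.
have h2 : L1 (y j) * nrmv v <= L1 (y j) * (- k j / (L1 (y j) + 1)).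
  apply: ler_wpM2l => //; apply: ltW; exact: (lt_le_trans hv hle).
have h3 : L1 (y j) * (- k j / (L1 (y j) + 1)) <= - k j.
  rewrite mulrA ler_pdivrMr; last lra.
  nra.
lra.
Qed.

End Poly.

Section Geo.
Variables (R : realType) (m : nat).
Notation Pt := ('rV[R]_m * 'rV[R]_m)%type.
Implicit Types (p q v : Pt) (S G : set Pt).

Definition pz : Pt := (0, 0).
Definition pn p := pdist p pz.
Definition padd p q : Pt := (p.1 + q.1, p.2 + q.2).
Definition closedp G := forall p, (forall e, 0 < e -> exists q, G q /\ pdist q p < e) -> G p.
Definition conep G := G pz /\ forall t p, 0 < t -> G p -> G (pscale t p).
Definition loc_eq S G pb d := forall p, pdist p pb < d -> (S p <-> G (psub p pb)).

Lemma pn_ge0 p : 0 <= pn p. Proof. exact: pdist_ge0. Qed.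

Lemma pdistE p q : pdist p q = pn (psub p q).
Proof. by rewrite /pn pdist_sub. Qed.

Lemma pn_scale t p : 0 <= t -> pn (pscale t p) = t * pn p.
Proof.
move=> t0; rewrite /pn /pdist /pscale /= !subr0 !nrmvZ ger0_norm //.
by rewrite maxr_pMr.
Qed.

Lemma psub_padd pb x : psub (padd pb x) pb = x.
Proof. by case: x => x1 x2; rewrite /psub /padd /= !(addrC pb.1) !(addrC pb.2) !addrK. Qed.

Lemma pdist_padd pb x : pdist (padd pb x) pb = pn x.
Proof. by rewrite pdistE psub_padd. Qed.

Lemma pscaleK t p : t != 0 -> pscale t^-1 (pscale t p) = p.
Proof. by move=> t0; case: p => p1 p2; rewrite /pscale /= !scalerA mulVf // !scale1r. Qed.

Lemma pscaleKV t p : t != 0 -> pscale t (pscale t^-1 p) = p.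
Proof. by move=> t0; case: p => p1 p2; rewrite /pscale /= !scalerA mulfV // !scale1r. Qed.

Lemma psub_split t q' q pb :
  pscale t (psub q' q) = psub (pscale t (psub q' pb)) (pscale t (psub q pb)).
Proof.
rewrite /pscale /psub /=; congr (_, _); rewrite -scalerBr; congr (_ *: _);
  by rewrite opprB addrA subrK.
Qed.

Lemma pn_psub a b : pn (psub a b) <= pn a + pn b.
Proof.
rewrite -pdistE; apply: (le_trans (pdist_tri a pz b)).
by rewrite /pn (pdistC pz).
Qed.

Lemma pn_padd a b : pn (padd a b) <= pn a + pn b.
Proof.
rewrite /pn /pdist /padd /= !subr0 ge_max; apply/andP; split;
  apply: (le_trans (nrmvD _ _)); apply: lerD; rewrite le_max lexx ?orbT //.
Qed.

Lemma pnE p : pn p = Num.max (nrmv p.1) (nrmv p.2).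
Proof. by rewrite /pn /pdist /= !subr0. Qed.


Lemma pn_near t x v e : 0 < t -> pdist (pscale t^-1 x) v < e -> pn x <= t * (pn v + e).
Proof.
move=> t0 h.
have : pn (pscale t^-1 x) <= pn v + e.
  have := pdist_tri (pscale t^-1 x) v pz; rewrite -/(pn _) -/(pn _).
  move=> h'; apply: (le_trans h'); rewrite addrC lerD2l; exact: ltW.
rewrite pn_scale; last by rewrite invr_ge0 ltW.
move=> h2.
by have := ler_wpM2l (ltW t0) h2; rewrite mulrA mulfV ?gt_eqF // mul1r.
Qed.

Lemma tangent_loc S G pb d : 0 < d -> loc_eq S G pb d -> closedp G -> conep G ->
  tangent_cone S pb = G.
Proof.
move=> d0 hl Gc [G0 Gs]; apply/seteqP; split => v.
  move=> hv; apply: Gc => e e0.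
  pose e' := Num.min e 1.
  have e'0 : 0 < e' by rewrite lt_min e0 ltr01.
  have d'0 : 0 < d / (pn v + 2) by apply: divr_gt0 => //; have := pn_ge0 v; lra.
  have [t [q [/andP[t0 td] [Sq hq]]]] := hv e' _ e'0 d'0.
  exists (pscale t^-1 (psub q pb)); split; last by apply: (lt_le_trans hq); rewrite ge_min lexx.
  apply: Gs; first by rewrite invr_gt0.
  apply/(hl q) => //.
  rewrite pdistE; apply: le_lt_trans (pn_near t0 hq) _.
  have e'1 : e' <= 1 by rewrite ge_min lexx orbT.
  have pv := pn_ge0 v.
  have : t * (pn v + e') <= t * (pn v + 1) by apply: ler_wpM2l; [exact: ltW|lra].
  have : t * (pn v + 1) < d / (pn v + 2) * (pn v + 1) by rewrite ltr_pM2r //; lra.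
  have : d / (pn v + 2) * (pn v + 1) < d.
    rewrite mulrAC ltr_pdivrMr; last lra.
    rewrite ltr_pM2l //; lra.
  lra.
move=> Gv e dd e0 dd0.
have pv := pn_ge0 v.
pose t := Num.min dd (d / (pn v + 1)) / 2.
have hmin : 0 < Num.min dd (d / (pn v + 1)).
  by rewrite lt_min dd0 /= divr_gt0 //; lra.
have t0 : 0 < t by rewrite /t divr_gt0.
exists t, (padd pb (pscale t v)); split.
  apply/andP; split => //; rewrite /t.
  have : Num.min dd (d / (pn v + 1)) <= dd by rewrite ge_min lexx.
  lra.
split.
  apply/hl; last by rewrite psub_padd; apply: Gs.
  rewrite pdist_padd pn_scale; last exact: ltW.
  have : t <= d / (pn v + 1) / 2.
    rewrite /t ler_pM2r; last lra.
    by rewrite ge_min lexx orbT.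
  have : d / (pn v + 1) / 2 * pn v < d.
    rewrite mulrAC ltr_pdivrMr; last lra.
    rewrite mulrAC ltr_pdivrMr; last lra.
    nra.
  move=> h1 h2; have := ler_wpM2r pv h2; lra.
by rewrite psub_padd pscaleK ?gt_eqF // pdist_refl.
Qed.


Lemma psub_padd2 pb x y : psub (padd pb x) (padd pb y) = psub x y.
Proof.
by rewrite /psub /padd /=; congr (_, _); rewrite opprD addrACA subrr add0r.
Qed.

Lemma psub_scale t (a b : Pt) : psub (pscale t a) (pscale t b) = pscale t (psub a b).
Proof. by rewrite /psub /pscale /= !scalerBr. Qed.

Lemma sg_loc S G pb d : 0 < d -> loc_eq S G pb d -> conep G -> closedp (mdiff G G) ->
  gph_sgderiv S pb = mdiff G G.
Proof.
move=> d0 hl [G0 Gs] Gc; apply/seteqP; split => v.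
  move=> hv; apply: Gc => e e0.
  pose e' := Num.min e 1.
  have e'0 : 0 < e' by rewrite lt_min e0 ltr01.
  have e'1 : e' <= 1 by rewrite ge_min lexx orbT.
  have pv := pn_ge0 v.
  have dd0 : 0 < d / (pn v + 2) by apply: divr_gt0 => //; lra.
  have [t [q [q' [/andP[t0 td] [Sq [hq [Sq' hq']]]]]]] := hv e' _ e'0 dd0.
  have hn := pn_near t0 hq'.
  have hqd : pdist q pb < d.
    apply: (lt_le_trans hq); rewrite ler_pdivrMr; last lra.
    nra.
  have hq'd : pdist q' pb < d.
    apply: (le_lt_trans (pdist_tri q' q pb)); rewrite (pdistE q').
    have : t * (pn v + e') <= t * (pn v + 1) by apply: ler_wpM2l; [exact: ltW|lra].
    have : t * (pn v + 1) <= d / (pn v + 2) * (pn v + 1).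
      by apply: ler_wpM2r; [lra|exact: ltW].
    have : d / (pn v + 2) * (pn v + 1) + d / (pn v + 2) = d.
      have h2 : pn v + 2 != 0 by rewrite gt_eqF //; lra.
      by field.
    lra.
  exists (pscale t^-1 (psub q' q)); split; last by apply: (lt_le_trans hq'); rewrite ge_min lexx.
  exists (pscale t^-1 (psub q' pb)), (pscale t^-1 (psub q pb)).
  split; first by apply: Gs; [rewrite invr_gt0|apply/(hl q')].
  split; first by apply: Gs; [rewrite invr_gt0|apply/(hl q)].
  exact: psub_split.
move=> [a [b [Ga [Gb ->]]]] e dd e0 dd0.
have pa := pn_ge0 a; have pb0 := pn_ge0 b.
pose M := Num.min dd d.
have M0 : 0 < M by rewrite lt_min dd0 d0.
have Mdd : M <= dd by rewrite ge_min lexx.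
have Md : M <= d by rewrite ge_min lexx orbT.
pose t := M / (pn a + pn b + 1) / 2.
have t0 : 0 < t by rewrite /t !divr_gt0 //; lra.
have tM : t * (pn a + pn b + 1) <= M / 2.
  have h2 : pn a + pn b + 1 != 0 by rewrite gt_eqF //; lra.
  rewrite /t le_eqVlt; apply/orP; left; apply/eqP; by field.
have ta : t * pn a < M by nra.
have tb : t * pn b < M by nra.
have tdd : t < dd by nra.
exists t, (padd pb (pscale t b)), (padd pb (pscale t a)).
split; first by rewrite t0 tdd.
have db : pdist (padd pb (pscale t b)) pb < M by rewrite pdist_padd pn_scale // ltW.
have da : pdist (padd pb (pscale t a)) pb < M by rewrite pdist_padd pn_scale // ltW.
split; first by apply/hl; [exact: (lt_le_trans db Md)|rewrite psub_padd; apply: Gs].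
split; first by apply: (lt_le_trans db).
split; first by apply/hl; [exact: (lt_le_trans da Md)|rewrite psub_padd; apply: Gs].
by rewrite psub_padd2 psub_scale pscaleK ?gt_eqF // pdist_refl.
Qed.

Lemma inner_sub S pb : S pb -> gph_sgderiv_inner S pb `<=` gph_sgderiv S pb.
Proof.
move=> Spb v hv e dd e0 dd0.
have [d [d0 hd]] := hv e e0.
pose t := Num.min d dd / 2.
have M0 : 0 < Num.min d dd by rewrite lt_min d0 dd0.
have t0 : 0 < t by rewrite divr_gt0.
have m1 : Num.min d dd <= d by rewrite ge_min lexx.
have m2 : Num.min d dd <= dd by rewrite ge_min lexx orbT.
have td : t < d by rewrite /t; lra.
have tdd : t < dd by rewrite /t; lra.
have [q' [Sq' hq']] : exists q', S q' /\ pdist (pscale t^-1 (psub q' pb)) v < e.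
  by apply: hd => //; [rewrite t0 td|rewrite pdist_refl].
by exists t, pb, q'; rewrite t0 tdd pdist_refl.
Qed.


Lemma inner_loc S G pb d : 0 < d -> loc_eq S G pb d -> conep G ->
  (forall a b, G a -> G b -> G (padd a b)) -> G `<=` gph_sgderiv_inner S pb.
Proof.
move=> d0 hl [G0 Gs] Gadd v Gv e e0.
have pv := pn_ge0 v.
pose d' := d / (2 * (pn v + 1)).
have d'0 : 0 < d' by rewrite /d' divr_gt0 //; lra.
have hd' : d' * (pn v + 1) = d / 2.
  have h2 : pn v + 1 != 0 by rewrite gt_eqF //; lra.
  by rewrite /d'; field.
exists d'; split => // t q /andP[t0 td] Sq hq.
exists (padd q (pscale t v)); split; last by rewrite psub_padd pscaleK ?gt_eqF // pdist_refl.
have hq2 : pdist q pb < d.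
  apply: (lt_le_trans hq); have : d' <= d' * (pn v + 1) by nra.
  lra.
have e1 : psub (padd q (pscale t v)) pb = padd (psub q pb) (pscale t v).
  by rewrite /psub /padd /=; congr (_, _); rewrite addrAC.
apply/hl; last by rewrite e1; apply: Gadd; [apply/hl|apply: Gs].
rewrite pdistE e1; apply: (le_lt_trans (pn_padd _ _)).
rewrite pn_scale; last exact: ltW.
rewrite -pdistE.
have : t * pn v <= d' * pn v by apply: ler_wpM2r => //; exact: ltW.
lra.
Qed.

Lemma loc_shift S G pb d q0 : loc_eq S G pb d ->
  (forall a b, G a -> G b -> G (padd a b)) -> (forall a b, G a -> G b -> G (psub a b)) ->
  S q0 -> pdist q0 pb < d / 2 -> loc_eq S G q0 (d / 2).
Proof.
move=> hl Gadd Gsub Sq0 hq0 p hp.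
have hpb : pdist p pb < d.
  apply: (le_lt_trans (pdist_tri p q0 pb)); lra.
have Gq0 : G (psub q0 pb) by apply/hl => //; have := pdist_ge0 q0 pb; lra.
have e1 : psub p pb = padd (psub p q0) (psub q0 pb).
  by rewrite /psub /padd /=; congr (_, _); rewrite addrA subrK.
have e2 : psub p q0 = psub (psub p pb) (psub q0 pb).
  by rewrite /psub /=; congr (_, _); rewrite opprB addrA subrK.
rewrite (hl p hpb); split => h.
  by rewrite e2; apply: Gsub.
by rewrite e1; apply: Gadd.
Qed.

Lemma closedp_union (I : finType) (Q : I -> set Pt) :
  (forall i, closedp (Q i)) -> closedp (fun p => exists i, Q i p).
Proof.
move=> Qc p hp; apply: contrapT => hn.
have h i : exists e, 0 < e /\ forall q, Q i q -> e <= pdist q p.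
  apply: contrapT => hn2; apply: hn; exists i; apply: Qc => e e0.
  apply: contrapT => hn3; apply: hn2; exists e; split => // q Qq.
  rewrite leNgt; apply/negP => lt; apply: hn3; by exists q.
have [f hf] := choice h.
pose e := \big[Num.min/1]_i f i.
have e0 : 0 < e by apply: lt_bigmin => // i _; case: (hf i).
have [q [[i Qq] hq]] := hp e e0.
have : e <= f i by apply: (@bigmin_le_cond _ _ _ _ _ xpredT f).
have := (hf i).2 q Qq; lra.
Qed.

End Geo.

Section NC.
Variables (R : realType) (m : nat) (I : finType) (c : I -> 'rV[R]_m).
Notation V := 'rV[R]_m.
Notation Pt := ('rV[R]_m * 'rV[R]_m)%type.

Definition Kc : set V := [set w | forall k, dotv (c k) w <= 0].
Notation G := (gph_normal_cone Kc).

Lemma Kc0 : Kc 0. Proof. by move=> k; rewrite dotv0r. Qed.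
Lemma KcD u w : Kc u -> Kc w -> Kc (u + w).
Proof. by move=> hu hw k; rewrite dotvDr; have := hu k; have := hw k; lra. Qed.
Lemma KcZ t w : 0 <= t -> Kc w -> Kc (t *: w).
Proof. by move=> t0 hw k; rewrite dotvZr; apply: mulr_ge0_le0. Qed.

Lemma G_char w v : G (w, v) <->
  Kc w /\ (forall u, Kc u -> dotv v u <= 0) /\ dotv v w = 0.
Proof.
split.
  move=> [/= Kw hv]; split => //.
  have h1 u : Kc u -> dotv v u <= 0.
    by move=> Ku; have := hv (w + u) (KcD Kw Ku); rewrite /= (addrC w u) addrK.
  split => //; apply/eqP; rewrite eq_le; apply/andP; split; first exact: h1.
  by have := hv 0 Kc0; rewrite /= sub0r dotvNr oppr_le0.
move=> [Kw [hv hw]]; split => // u Ku /=; rewrite dotvBr hw subr0; exact: hv.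
Qed.

Lemma polar_cone v : (forall u, Kc u -> dotv v u <= 0) <-> Cone c v.
Proof.
split.
  by move=> h; apply: farkas_cone => y hy; apply: h => k; exact: hy.
by move=> Cv u Ku; apply: (Cone_dot Ku Cv).
Qed.

Lemma le0_eps (x M : R) : 0 <= M -> (forall e, 0 < e -> e <= 1 -> x <= M * e) -> x <= 0.
Proof.
move=> M0 h; rewrite leNgt; apply/negP => x0.
pose e := Num.min 1 (x / (M + 1)).
have e0 : 0 < e by rewrite lt_min ltr01 divr_gt0 //; lra.
have e1 : e <= 1 by rewrite ge_min lexx.
have e2 : e <= x / (M + 1) by rewrite ge_min lexx orbT.
have := h e e0 e1.
have : M * e <= M * (x / (M + 1)) by apply: ler_wpM2l.
have : M * (x / (M + 1)) < x.
  rewrite mulrA ltr_pdivrMr; last lra.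
  nra.
lra.
Qed.

Lemma dotv_cont (y u u' : V) : dotv y u' <= dotv y u + L1 y * nrmv (u' - u).
Proof. exact: dotv_near. Qed.

Lemma G_closed : closedp G.
Proof.
move=> [w v] hp; apply/G_char.
have Kw : Kc w.
  move=> k; apply: (@le0_eps _ (L1 (c k))) => [|e e0 e1]; first exact: L1_ge0.
  have [[w' v'] [[/= Kw' _] hq]] := hp e e0.
  have := dotv_cont (c k) w' w; have := Kw' k.
  have : nrmv (w - w') <= e by rewrite nrmvB; apply: ltW; apply: le_lt_trans (pdist_le1 _ _) hq.
  move=> h1 h2 h3; have := ler_wpM2l (L1_ge0 (c k)) h1; lra.
suff hv : forall u, Kc u -> dotv v (u - w) <= 0.
  split => //; split.
    by move=> u Ku; have := hv (w + u) (KcD Kw Ku); rewrite (addrC w u) addrK.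
  apply/eqP; rewrite eq_le; apply/andP; split.
    by have := hv (w + w) (KcD Kw Kw); rewrite addrK.
  by have := hv 0 Kc0; rewrite sub0r dotvNr oppr_le0.
move=> u Ku.
pose Mb := m%:R * (nrmv u + nrmv w + 1) + L1 v.
have Mb0 : 0 <= Mb.
  rewrite /Mb; apply: addr_ge0; last exact: L1_ge0.
  by apply: mulr_ge0 => //; have := nrmv_ge0 u; have := nrmv_ge0 w; lra.
apply: (@le0_eps _ Mb) => // e e0 e1.
have [[w' v'] [[/= Kw' hv'] hq]] := hp e e0.
have h1 : nrmv (w' - w) <= e by apply: ltW; apply: le_lt_trans (pdist_le1 _ _) hq.
have h2 : nrmv (v' - v) <= e by apply: ltW; apply: le_lt_trans (pdist_le2 _ _) hq.
have := hv' u Ku.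
have e3 : dotv v (u - w) = dotv v' (u - w') - dotv (v' - v) (u - w') + dotv v (w' - w).
  by rewrite !dotvBl !dotvBr; ring.
have b1 : `|dotv (v' - v) (u - w')| <= m%:R * (nrmv u + nrmv w + 1) * e.
  rewrite dotvC; apply: (le_trans (dotv_bound _ _)).
  apply: (le_trans (y := L1 (u - w') * e)); first by apply: ler_wpM2l => //; exact: L1_ge0.
  apply: ler_wpM2r; first exact: ltW.
  apply: (le_trans (L1_bound _)); apply: ler_wpM2l => //.
  have : nrmv (u - w') <= nrmv u + nrmv w'.
    by apply: (le_trans (nrmvD _ _)); rewrite nrmvN.
  have : nrmv w' <= nrmv w + nrmv (w' - w).
    by have := nrmvD w (w' - w); rewrite addrC subrK.
  lra.
have b2 : `|dotv v (w' - w)| <= L1 v * e.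
  apply: (le_trans (dotv_bound _ _)); apply: ler_wpM2l => //; exact: L1_ge0.
have := ler_norm (- dotv (v' - v) (u - w')); rewrite normrN.
have := ler_norm (dotv v (w' - w)).
rewrite e3 /Mb; nra.
Qed.

Lemma G_cone : conep G.
Proof.
split.
  by apply/G_char; split; [exact: Kc0|split; [move=> u _; rewrite dotv0l|rewrite dotv0l]].
move=> t [w v] t0 /G_char [Kw [hv hw]]; apply/G_char; rewrite /pscale /=.
split; first by apply: KcZ => //; exact: ltW.
split; first by move=> u Ku; rewrite dotvZl; apply: mulr_ge0_le0; [exact: ltW|exact: hv].
by rewrite dotvZl dotvZr hw !mulr0.
Qed.


Definition FI (I1 : {set I}) : set V :=
  [set w | Kc w /\ forall k, k \in I1 -> dotv (c k) w = 0].
Definition cI (I1 : {set I}) (k : I) : V := if k \in I1 then c k else 0.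

Lemma G_char2 w v : G (w, v) <-> Kc w /\ Cone c v /\ dotv v w = 0.
Proof.
rewrite G_char; split => [[Kw [hv hw]]|[Kw [Cv hw]]]; split => //; split => //.
  by apply/polar_cone.
by apply/polar_cone.
Qed.

Lemma G_dec w v : G (w, v) <-> exists I1, FI I1 w /\ Cone (cI I1) v.
Proof.
rewrite G_char2; split.
  move=> [Kw [[nu [nu0 ev]] hw]].
  have hterm k : nu k * dotv (c k) w = 0.
    have hs : \sum_k nu k * dotv (c k) w = dotv v w.
      by rewrite ev dotv_suml; apply: eq_bigr => i _; rewrite dotvZl.
    have : \sum_k (- (nu k * dotv (c k) w)) = 0 by rewrite sumrN hs hw oppr0.
    move/eqP; rewrite psumr_eq0; last by move=> i _; rewrite oppr_ge0; apply: mulr_ge0_le0.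
    by move/allP/(_ k (mem_index_enum k)); rewrite oppr_eq0 => /eqP.
  exists (finset (fun k => dotv (c k) w == 0)); split.
    by split => // k; rewrite inE => /eqP.
  exists nu; split => //; rewrite ev; apply: eq_bigr => k _; rewrite /cI inE.
  case: eqP => // hk; have := hterm k; move/eqP; rewrite mulf_eq0 => /orP[/eqP ->|/eqP //].
  by rewrite !scale0r.
move=> [I1 [[Kw hw] [nu [nu0 ev]]]]; split => //; split.
  exists (fun k => if k \in I1 then nu k else 0); split.
    by move=> k; case: (k \in I1).
  by rewrite ev; apply: eq_bigr => k _; rewrite /cI; case: (k \in I1); rewrite ?scale0r ?scaler0.
rewrite ev dotv_suml; apply: big1 => k _; rewrite dotvZl /cI.
by case: ifP => [/hw ->|_]; rewrite ?dotv0l mulr0.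
Qed.

Lemma FI_fin I1 : exists (J : finType) (u : J -> V), forall w, FI I1 w <-> Cone u w.
Proof.
pose d (s : I + I) : V := match s with inl k => c k | inr k => if k \in I1 then - c k else 0 end.
have [J [u hu]] := minkowski d.
exists J, u => w; rewrite -hu; split.
  move=> [Kw hw] [k|k] /=; first exact: Kw.
  by case: ifP => [/hw|_]; rewrite ?dotvNl ?dotv0l // => ->; rewrite oppr0.
move=> h; split; first by move=> k; exact: (h (inl k)).
move=> k kI; apply/eqP; rewrite eq_le (h (inl k)) /=.
by have := h (inr k); rewrite /= kI dotvNl oppr_le0.
Qed.

Definition famdiff (J1 J2 : finType) (a : J1 -> V) (b : J2 -> V) (s : J1 + J2) : V :=
  match s with inl i => a i | inr j => - b j end.

Lemma Cone_diff (J1 J2 : finType) (a : J1 -> V) (b : J2 -> V) x :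
  (exists x1 x2, Cone a x1 /\ Cone b x2 /\ x = x1 - x2) <-> Cone (famdiff a b) x.
Proof.
split.
  move=> [x1 [x2 [[n1 [n10 ->]] [[n2 [n20 ->]] ->]]]].
  exists (fun s => match s with inl i => n1 i | inr j => n2 j end); split.
    by case.
  rewrite big_sumType /= -sumrN; congr (_ + _); apply: eq_bigr => j _.
  by rewrite scalerN.
move=> [n [n0 ->]]; rewrite big_sumType /=.
exists (\sum_i n (inl i) *: a i), (\sum_j n (inr j) *: b j); split.
  by exists (fun i => n (inl i)).
split; first by exists (fun j => n (inr j)).
by rewrite -sumrN; congr (_ + _); apply: eq_bigr => j _; rewrite scalerN.
Qed.

Lemma closedp_prod (A B : set V) : closedv A -> closedv B -> closedp (fun p : Pt => A p.1 /\ B p.2).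
Proof.
move=> hA hB [x y] hp; split => /=.
  apply: hA => e e0; have [[x' y'] [[Ax _] h]] := hp e e0.
  by exists x'; split => //; apply: le_lt_trans (pdist_le1 _ _) h.
apply: hB => e e0; have [[x' y'] [[_ By] h]] := hp e e0.
by exists y'; split => //; apply: le_lt_trans (pdist_le2 _ _) h.
Qed.

Lemma mdiff_closed : closedp (mdiff G G).
Proof.
pose Q (i : {set I} * {set I}) (p : Pt) := exists w1 w2 v1 v2,
  FI i.1 w1 /\ FI i.2 w2 /\ Cone (cI i.1) v1 /\ Cone (cI i.2) v2 /\ p = (w1 - w2, v1 - v2).
have -> : mdiff G G = (fun p => exists i, Q i p).
  apply/funext => p; apply/propext; split.
    move=> [[w1 v1] [[w2 v2] [/G_dec [I1 [F1 C1]] [/G_dec [I2 [F2 C2]] ->]]]].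
    by exists (I1, I2), w1, w2, v1, v2.
  move=> [i [w1 [w2 [v1 [v2 [F1 [F2 [C1 [C2 ->]]]]]]]]].
  exists (w1, v1), (w2, v2); split; first by apply/G_dec; exists i.1.
  by split; first by apply/G_dec; exists i.2.
apply: closedp_union => -[I1 I2].
have [J1 [u1 hu1]] := FI_fin I1.
have [J2 [u2 hu2]] := FI_fin I2.
have -> : Q (I1, I2) = (fun p => Cone (famdiff u1 u2) p.1 /\ Cone (famdiff (cI I1) (cI I2)) p.2).
  apply/funext => -[w v]; apply/propext; split.
    move=> [w1 [w2 [v1 [v2 [F1 [F2 [C1 [C2 E]]]]]]]]; case: E => -> -> /=.
    split; apply/Cone_diff; first by exists w1, w2; rewrite -hu1 -hu2.
    by exists v1, v2.
  move=> [h1 h2]; move: h1 h2 => /= /Cone_diff [w1 [w2 [C1 [C2 ->]]]] /Cone_diff [v1 [v2 [D1 [D2 ->]]]].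
  by exists w1, w2, v1, v2; rewrite hu1 hu2.
by apply: closedp_prod; apply: Cone_closed.
Qed.

End NC.

Section Fun.
Variables (R : realType) (m : nat) (g : 'rV[R]_m -> \bar R) (k : nat)
  (a : 'I_k -> 'rV[R]_m) (b cc : 'I_k -> R) (zb lb : 'rV[R]_m).
Notation V := 'rV[R]_m.
Hypothesis hepi : epigraph g = [set p | forall i, dotv (a i) p.1 + b i * p.2 <= cc i].
Hypothesis hprop : forall x, (g x <> -oo)%E.
Hypothesis hsub : subdiff g zb lb.

Lemma epi_iff x t : (g x <= t%:E)%E <-> forall i, dotv (a i) x + b i * t <= cc i.
Proof.
have := congr1 (fun S => S (x, t)) hepi; rewrite /epigraph /= => ->; by [].
Qed.

Lemma g_pinfty x : (forall t, ~ (g x <= t%:E)%E) -> g x = +oo%E.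
Proof.
move=> h; case E: (g x) => [r| |] //.
  by exfalso; apply: (h r); rewrite E.
by exfalso; exact: (hprop E).
Qed.

Definition gb := fine (g zb).
Lemma hgb : g zb = gb%:E.
Proof. by rewrite /gb fineK //; case: hsub. Qed.

Definition r i := cc i - dotv (a i) zb - b i * gb.

Lemma r_ge0 i : 0 <= r i.
Proof.
have /epi_iff/(_ i) : (g zb <= gb%:E)%E by rewrite hgb.
rewrite /r; lra.
Qed.

Lemma b_le0 i : b i <= 0.
Proof.
apply: (@ray_le _ _ (dotv (a i) zb + b i * gb - cc i)) => t t0.
have /epi_iff/(_ i) : (g zb <= (gb + t)%:E)%E by rewrite hgb lee_fin; lra.
lra.
Qed.

Definition Ai i := (r i == 0) && (b i < 0).
Definition Ji i := (r i == 0) && (b i == 0).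
Definition al i : V := (- b i)^-1 *: a i.

Lemma al_a i : Ai i -> a i = (- b i) *: al i.
Proof.
move=> /andP[_ bi]; rewrite /al scalerA mulfV ?scale1r //.
by rewrite oppr_eq0 lt_eqF.
Qed.

Lemma exA : exists i, Ai i.
Proof.
pose tau := \big[Num.min/1]_(i | 0 < r i) (r i / (`|b i| + 1)).
have tau0 : 0 < tau by apply: lt_bigmin => // i ri; apply: divr_gt0 => //; have := normr_ge0 (b i); lra.
have : ~ (g zb <= (gb - tau)%:E)%E by rewrite hgb lee_fin; lra.
move/epi_iff => /existsNP [i hi]; exists i.
have hi' : cc i < dotv (a i) zb + b i * (gb - tau) by rewrite ltNge; apply/negP.
have bi0 := b_le0 i; have ri0 := r_ge0 i.
have bi : b i < 0.
  rewrite lt_neqAle bi0 andbT; apply/negP => /eqP e.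
  rewrite e in hi'; rewrite /r e in ri0; lra.
rewrite /Ai bi andbT; apply/negPn/negP => rn.
have rp : 0 < r i by rewrite lt_neqAle eq_sym rn r_ge0.
have : tau <= r i / (`|b i| + 1) by apply: (@bigmin_le_cond _ _ _ _ _ (fun i => 0 < r i) (fun i => r i / (`|b i| + 1))).
have nb : `|b i| = - b i by rewrite ltr0_norm.
rewrite nb => ht.
have : - b i * tau <= - b i * (r i / (- b i + 1)) by apply: ler_wpM2l; lra.
have : - b i * (r i / (- b i + 1)) < r i.
  rewrite mulrA ltr_pdivrMr; last lra.
  nra.
rewrite /r in rp ri0 *; lra.
Qed.

Definition i0 := xchoose exA.
Lemma Ai0 : Ai i0. Proof. exact: xchooseP. Qed.

Definition H (w : V) : R := \big[Num.max/dotv (al i0) w]_(i | Ai i) dotv (al i) w.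

Lemma H_ge i w : Ai i -> dotv (al i) w <= H w.
Proof. by move=> hi; apply: (@le_bigmax_cond _ _ _ _ i Ai (fun i => dotv (al i) w)). Qed.

Lemma H_attain w : exists i, Ai i /\ H w = dotv (al i) w.
Proof.
rewrite /H; elim/big_ind: _.
- by exists i0; split => //; exact: Ai0.
- move=> x y [i [hi ->]] [j [hj ->]]; rewrite /Num.max.
  by case: ifP => _; [exists j|exists i].
- by move=> i hi; exists i.
Qed.

Lemma H_le w s : (forall i, Ai i -> dotv (al i) w <= s) -> H w <= s.
Proof. by move=> h; have [i [hi ->]] := H_attain w; apply: h. Qed.

Lemma H_scale t w : 0 <= t -> H (t *: w) = t * H w.
Proof.
move=> t0; apply/eqP; rewrite eq_le; apply/andP; split.
  apply: H_le => i hi; rewrite dotvZr; apply: ler_wpM2l => //; exact: H_ge.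
have [i [hi ->]] := H_attain w; rewrite -dotvZr; exact: H_ge.
Qed.

Lemma H0 : H 0 = 0.
Proof. by rewrite -(scale0r 0) H_scale // mul0r. Qed.

Lemma H_add x y : H (x + y) <= H x + H y.
Proof.
apply: H_le => i hi; rewrite dotvDr; apply: lerD; exact: H_ge.
Qed.

Lemma H_conv t x y : 0 <= t <= 1 -> H (t *: x + (1 - t) *: y) <= t * H x + (1 - t) * H y.
Proof.
move=> /andP[t0 t1]; apply: (le_trans (H_add _ _)).
by rewrite !H_scale //; lra.
Qed.

Definition Ma := \sum_i L1 (al i).
Lemma Ma_ge0 : 0 <= Ma. Proof. by apply: sumr_ge0 => i _; exact: L1_ge0. Qed.

Lemma H_lip x y : H x <= H y + Ma * nrmv (x - y).
Proof.
have [i [hi ->]] := H_attain x.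
have := dotv_near (al i) x y.
have : L1 (al i) <= Ma by rewrite /Ma (bigD1 i) //= lerDl; apply: sumr_ge0 => j _; exact: L1_ge0.
move=> h1 h2; have := H_ge y hi.
have := ler_wpM2r (nrmv_ge0 (x - y)) h1.
lra.
Qed.

Lemma H_bound w : `|H w| <= Ma * nrmv w.
Proof.
have := H_lip w 0; have := H_lip 0 w; rewrite H0 subr0 sub0r nrmvN !add0r.
move=> h1 h2; rewrite ler_norml; apply/andP; split; lra.
Qed.

Definition C (w : V) := forall j, Ji j -> dotv (a j) w <= 0.

Lemma C0 : C 0. Proof. by move=> j _; rewrite dotv0r. Qed.
Lemma CD x y : C x -> C y -> C (x + y).
Proof. by move=> hx hy j hj; rewrite dotvDr; have := hx j hj; have := hy j hj; lra. Qed.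
Lemma CZ t x : 0 <= t -> C x -> C (t *: x).
Proof. by move=> t0 hx j hj; rewrite dotvZr; apply: mulr_ge0_le0 => //; exact: hx. Qed.
Lemma Cconv t x y : 0 <= t <= 1 -> C x -> C y -> C (t *: x + (1 - t) *: y).
Proof.
move=> /andP[t0 t1] hx hy; apply: CD; apply: CZ => //; lra.
Qed.

Lemma notC_pinfty w : ~ C w -> g (zb + w) = +oo%E.
Proof.
move=> /existsNP [j /not_implyP [hj hn]].
have hp : 0 < dotv (a j) w by rewrite ltNge; apply/negP.
apply: g_pinfty => t /epi_iff /(_ j).
move: hj => /andP[/eqP rj /eqP bj].
rewrite bj mul0r addr0 dotvDr; move: rj; rewrite /r bj mul0r subr0 => rj.
lra.
Qed.


Definition delta := \big[Num.min/1]_(i | r i != 0) (r i / (L1 (a i) + `|b i| * Ma + 1)).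

Lemma delta_gt0 : 0 < delta.
Proof.
apply: lt_bigmin => // i ri; apply: divr_gt0.
  by rewrite lt_neqAle eq_sym ri r_ge0.
have := L1_ge0 (a i); have := mulr_ge0 (normr_ge0 (b i)) Ma_ge0; lra.
Qed.

Lemma loc_C w : nrmv w < delta -> C w -> g (zb + w) = (gb + H w)%:E.
Proof.
move=> hw Cw.
have up : (g (zb + w) <= (gb + H w)%:E)%E.
  apply/epi_iff => i.
  suff : dotv (a i) w + b i * H w <= r i by rewrite /r dotvDr; lra.
  have [ri|ri] := eqVneq (r i) 0.
    have [bi|bi] := eqVneq (b i) 0.
      by rewrite ri bi mul0r addr0; apply: Cw; rewrite /Ji ri bi eqxx.
    have hA : Ai i by rewrite /Ai ri eqxx /= lt_neqAle bi b_le0.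
    rewrite ri (al_a hA) dotvZl.
    have := H_ge w hA; have := b_le0 i; nra.
  have hle : delta <= r i / (L1 (a i) + `|b i| * Ma + 1).
    by apply: (@bigmin_le_cond _ _ _ _ _ (fun i => r i != 0) (fun i => r i / (L1 (a i) + `|b i| * Ma + 1))).
  have rp : 0 < r i by rewrite lt_neqAle eq_sym ri r_ge0.
  have Lp := L1_ge0 (a i); have Bp := mulr_ge0 (normr_ge0 (b i)) Ma_ge0.
  have n0 := nrmv_ge0 w.
  have h1 : dotv (a i) w <= L1 (a i) * nrmv w.
    by have := dotv_bound (a i) w; have := ler_norm (dotv (a i) w); lra.
  have h2 : b i * H w <= `|b i| * Ma * nrmv w.
    have := ler_norm (b i * H w); rewrite normrM => h.
    apply: (le_trans h); rewrite -mulrA; apply: ler_wpM2l => //; exact: H_bound.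
  have h3 : (L1 (a i) + `|b i| * Ma) * nrmv w < r i.
    have : nrmv w < r i / (L1 (a i) + `|b i| * Ma + 1) by apply: lt_le_trans hle.
    rewrite ltr_pdivlMr; last lra.
    nra.
  lra.
have fin : exists y, g (zb + w) = y%:E.
  move: up; case E: (g (zb + w)) => [y| |]; first by exists y.
    by [].
  by have := hprop E.
have [y ey] := fin.
rewrite ey; apply/eqP; rewrite eq_le; apply/andP; split; first by rewrite -ey.
have [i [hi eH]] := H_attain w.
have /epi_iff/(_ i) : (g (zb + w) <= y%:E)%E by rewrite ey.
move: (hi) => /andP[/eqP ri bi].
have e1 : dotv (a i) zb = cc i - b i * gb by move: ri; rewrite /r; lra.
have e2 : dotv (a i) w = - b i * H w by rewrite eH (al_a hi) dotvZl.
rewrite lee_fin dotvDr e1 e2.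
nra.
Qed.

Lemma epi_conv x x' t t' th : 0 <= th <= 1 -> (g x <= t%:E)%E -> (g x' <= t'%:E)%E ->
  (g (th *: x + (1 - th) *: x') <= (th * t + (1 - th) * t')%:E)%E.
Proof.
move=> /andP[t0 t1] /epi_iff h /epi_iff h'; apply/epi_iff => i.
rewrite dotvDr !dotvZr.
have := h i; have := h' i => e1 e2.
have : th * (dotv (a i) x + b i * t) <= th * cc i by apply: ler_wpM2l.
have : (1 - th) * (dotv (a i) x' + b i * t') <= (1 - th) * cc i by apply: ler_wpM2l => //; lra.
lra.
Qed.

Lemma theta_ex (dl : R) (w x : V) : nrmv w < dl ->
  exists th, 0 < th <= 1 /\ nrmv (w + th *: (x - w)) < dl.
Proof.
move=> hw.
pose n := nrmv (x - w).
have n0 : 0 <= n := nrmv_ge0 _.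
pose th := Num.min 1 ((dl - nrmv w) / (n + 1)).
have th0 : 0 < th by rewrite lt_min ltr01 /= divr_gt0 //; lra.
have th1 : th <= 1 by rewrite ge_min lexx.
have th2 : th <= (dl - nrmv w) / (n + 1) by rewrite ge_min lexx orbT.
exists th; split; first by rewrite th0 th1.
apply: (le_lt_trans (nrmvD _ _)); rewrite nrmvZ ger0_norm; last exact: ltW.
have : th * n <= (dl - nrmv w) / (n + 1) * n by apply: ler_wpM2r.
have : (dl - nrmv w) / (n + 1) * n < dl - nrmv w.
  rewrite mulrAC ltr_pdivrMr; last lra.
  have : 0 < dl - nrmv w by lra.
  nra.
rewrite -/n; lra.
Qed.

Lemma conv_eq (th : R) (p q : V) : th *: p + (1 - th) *: q = q + th *: (p - q).
Proof. by rewrite scalerBl scale1r scalerBr addrCA. Qed.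

Lemma SD w l : nrmv w < delta ->
  (subdiff g (zb + w) l <-> C w /\ forall x, C x -> H w + dotv l (x - w) <= H x).
Proof.
move=> hw; split.
  move=> [fin ineq].
  have Cw : C w.
    apply: contrapT => nC; move: fin; by rewrite (notC_pinfty nC).
  split => // x Cx.
  have [th [/andP[th0 th1] hth]] := theta_ex x hw.
  have e1 : w + th *: (x - w) = th *: x + (1 - th) *: w.
    by rewrite scalerBr scalerBl scale1r addrCA addrA.
  have Cu : C (w + th *: (x - w)) by rewrite e1; apply: Cconv => //; rewrite (ltW th0).
  have := ineq (zb + (w + th *: (x - w))).
  rewrite (loc_C hw Cw) (loc_C hth Cu).
  have -> : zb + (w + th *: (x - w)) - (zb + w) = th *: (x - w).
    by rewrite opprD addrACA subrr add0r addrC addKr.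
  rewrite -EFinD lee_fin dotvZr.
  have := @H_conv th x w; rewrite th1 (ltW th0) => /(_ isT); rewrite -e1 => hc.
  move=> h; have : th * (H w + dotv l (x - w)) <= th * H x by lra.
  by rewrite ler_pM2l.
move=> [Cw hx]; split; first by rewrite (loc_C hw Cw).
move=> y.
case E: (g y) => [t| |]; last by have := hprop E.
  2: by rewrite leey.
have hy : (g y <= t%:E)%E by rewrite E.
pose x := y - zb.
have [th [/andP[th0 th1] hth]] := theta_ex x hw.
have e1 : zb + (w + th *: (x - w)) = th *: y + (1 - th) *: (zb + w).
  rewrite conv_eq addrA /x; congr (_ + _ *: _).
  by rewrite opprD addrA.
have hgw : (g (zb + w) <= (gb + H w)%:E)%E by rewrite (loc_C hw Cw).
have := epi_conv (x := y) (x' := zb + w) (th := th) _ hy hgw.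
rewrite th1 (ltW th0) => /(_ isT); rewrite -e1 => hconv.
have Cu : C (w + th *: (x - w)).
  apply: contrapT => nC; move: hconv; by rewrite (notC_pinfty nC).
move: hconv; rewrite (loc_C hth Cu) lee_fin => hconv.
have := hx _ Cu.
have -> : w + th *: (x - w) - w = th *: (x - w) by rewrite addrC addKr.
rewrite dotvZr => hh.
rewrite (loc_C hw Cw) -EFinD lee_fin.
have -> : y - (zb + w) = x - w by rewrite /x opprD addrA.
have : th * (gb + H w + dotv l (x - w)) <= th * t by lra.
by rewrite ler_pM2l.
Qed.


Lemma sublin w l : C w ->
  (forall x, C x -> H w + dotv l (x - w) <= H x) <->
  (H w = dotv l w /\ forall x, C x -> dotv l x <= H x).
Proof.
move=> Cw; split.
  move=> h.
  have h1 := h 0 C0; rewrite H0 sub0r dotvNr in h1.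
  have h2 := h (w + w) (CD Cw Cw); rewrite addrK in h2.
  have e2 : H (w + w) = H w + H w.
    by rewrite -mulr2n -scaler_nat H_scale // mulr_natl mulr2n.
  rewrite e2 in h2.
  have eq : H w = dotv l w by lra.
  split => // x Cx; have := h x Cx; rewrite dotvBr eq; lra.
move=> [eq h] x Cx; rewrite dotvBr eq; have := h x Cx; lra.
Qed.

Lemma Sub0 x : C x -> dotv lb x <= H x.
Proof.
have := (@SD 0 lb); rewrite nrmv0 addr0 => /(_ delta_gt0) [] /(_ hsub) [_ h] _.
by move=> Cx; have := h x Cx; rewrite H0 subr0 add0r.
Qed.

Definition Pset (v : V) := forall x, C x -> dotv (lb + v) x <= H x.

Definition bt i : V := if Ai i then al i - lb else al i0 - lb.
Definition at' j : V := if Ji j then a j else 0.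

Lemma bt_le i x : C x -> dotv (bt i) x <= H x - dotv lb x.
Proof.
move=> Cx; rewrite /bt; case: ifP => hi; rewrite dotvBl lerD2r; apply: H_ge => //.
exact: Ai0.
Qed.

Lemma at_le j x : C x -> dotv (at' j) x <= 0.
Proof. by move=> Cx; rewrite /at'; case: ifP => hj; [exact: Cx|rewrite dotv0l]. Qed.

Lemma Pset_M v : Pset v <-> Mset bt at' v.
Proof.
split.
  move=> hP; apply: farkas_M => y kk hb ha.
  have Cy : C y by move=> j hj; have := ha j; rewrite /at' hj.
  have [i [hi eH]] := H_attain y.
  have := hP y Cy; rewrite dotvDl eH.
  have := hb i; rewrite /bt hi dotvBl.
  rewrite (dotvC v y) (dotvC lb y); lra.
move=> [mu [nu [mu0 [nu0 [s1 ->]]]]] x Cx.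
rewrite !dotvDl !dotv_suml.
have h1 : \sum_i dotv (mu i *: bt i) x <= \sum_i mu i * (H x - dotv lb x).
  by apply: ler_sum => i _; rewrite dotvZl; apply: ler_wpM2l => //; exact: bt_le.
have h2 : \sum_j dotv (nu j *: at' j) x <= 0.
  by apply: sumr_le0 => j _; rewrite dotvZl; apply: mulr_ge0_le0 => //; exact: at_le.
rewrite -mulr_suml s1 mul1r in h1.
lra.
Qed.

Lemma Pset0 : Pset 0.
Proof. by move=> x Cx; rewrite addr0; exact: Sub0. Qed.

Lemma Pset_loc : exists2 eps, 0 < eps &
  forall v, nrmv v < eps -> forall s, 0 < s -> Pset (s *: v) -> Pset v.
Proof.
have [I' [y [kk hrep]]] := Mrep bt at'.
have hP v : Pset v <-> forall j, dotv (y j) v + kk j <= 0 by rewrite Pset_M hrep.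
have k0 j : kk j <= 0 by have := (hP 0).1 Pset0 j; rewrite dotv0r add0r.
have [eps eps0 he] := @loc_cone _ _ _ y kk k0.
exists eps => // v hv s s0 /hP hs; apply/hP; exact: he v hv s s0 hs.
Qed.


Definition cK (s : 'I_k + 'I_k) : V :=
  match s with
  | inl i => if Ai i then al i - lb else 0
  | inr j => if Ji j then a j else 0
  end.

Lemma Kc_char w : Kc cK w <-> C w /\ H w = dotv lb w.
Proof.
split.
  move=> h.
  have Cw : C w by move=> j hj; have := h (inr j); rewrite /= hj.
  split => //; apply/eqP; rewrite eq_le Sub0 // andbT.
  apply: H_le => i hi; have := h (inl i); rewrite /= hi dotvBl; lra.
move=> [Cw eH] [i|j] /=.
  case: ifP => hi; last by rewrite dotv0l.
  by rewrite dotvBl -eH subr_le0; apply: H_ge.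
by case: ifP => hj; [exact: Cw|rewrite dotv0l].
Qed.

Lemma cK_le s x : C x -> dotv (cK s) x <= H x - dotv lb x.
Proof.
move=> Cx; have := Sub0 Cx => h0.
case: s => [i|j] /=.
  case: ifP => hi; last by rewrite dotv0l; lra.
  by rewrite dotvBl lerD2r; apply: H_ge.
case: ifP => hj; last by rewrite dotv0l; lra.
have := Cx j hj; lra.
Qed.

Lemma LocWV : exists2 d, 0 < d & forall w v, nrmv w < d -> nrmv v < d ->
  (subdiff g (zb + w) (lb + v) <-> gph_normal_cone (Kc cK) (w, v)).
Proof.
have [eps eps0 hloc] := Pset_loc.
exists (Num.min delta (eps / 2)).
  by rewrite lt_min delta_gt0 /= divr_gt0.
move=> w v hw hv.
have hwd : nrmv w < delta by apply: (lt_le_trans hw); rewrite ge_min lexx.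
have hve : nrmv v < eps / 2 by apply: (lt_le_trans hv); rewrite ge_min lexx orbT.
have hve' : nrmv v < eps by have := nrmv_ge0 v; lra.
rewrite (SD _ hwd) G_char.
split.
  move=> [Cw /(sublin _ Cw) [eH hP]].
  have P2 : Pset (2%:R *: v).
    apply: (hloc _ _ (2%:R)^-1); first by rewrite nrmvZ ger0_norm //; lra.
      by rewrite invr_gt0.
    by rewrite scalerA mulVf ?pnatr_eq0 // scale1r.
  have := P2 w Cw; rewrite dotvDl dotvZl eH dotvDl => h2.
  have := Sub0 Cw; rewrite eH dotvDl => h3.
  have vw : dotv v w = 0 by lra.
  have eH' : H w = dotv lb w by rewrite eH dotvDl vw addr0.
  split; first by apply/Kc_char.
  split => //.
  move=> u /Kc_char [Cu eu]; have := hP u Cu; rewrite dotvDl eu; lra.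
move=> [/Kc_char [Cw eH] [hv' vw]].
split => //; apply/(sublin _ Cw); split; first by rewrite dotvDl vw addr0.
have [nu [nu0 ev]] := (polar_cone cK v).1 hv'.
pose N := \sum_s nu s.
have N0 : 0 <= N by apply: sumr_ge0.
pose sc := (N + 1)^-1.
have sc0 : 0 < sc by rewrite invr_gt0; lra.
apply: (hloc v hve' sc sc0) => x Cx.
have hx := Sub0 Cx.
rewrite dotvDl dotvZl ev dotv_suml.
have h1 : \sum_s dotv (nu s *: cK s) x <= N * (H x - dotv lb x).
  rewrite /N mulr_suml; apply: ler_sum => s _; rewrite dotvZl; apply: ler_wpM2l => //.
  exact: cK_le.
have h2 : sc * N <= 1.
  rewrite /sc mulrC ler_pdivrMr; lra.
have := ler_wpM2l (ltW sc0) h1.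
have : sc * (N * (H x - dotv lb x)) <= H x - dotv lb x.
  rewrite mulrA; have : 0 <= H x - dotv lb x by lra.
  move=> hh; have := ler_wpM2r hh h2; lra.
lra.
Qed.


Lemma sup_approx (x : R) (S0 : \bar R) :
  (forall eta, 0 < eta -> ((x - eta)%:E <= S0)%E) -> (x%:E <= S0)%E.
Proof.
case: S0 => [s| |] h; last by have := h 1 ltr01.
  rewrite lee_fin leNgt; apply/negP => xs.
  have hp : 0 < (x - s) / 2 by apply: divr_gt0 => //; lra.
  have := h _ hp; rewrite lee_fin; lra.
by rewrite leey.
Qed.

Lemma quot_fin (y t : R) : 0 < t ->
  ((y%:E - gb%:E) * (t^-1)%:E)%E = ((y - gb) / t)%:E.
Proof. by move=> t0; rewrite -EFinB -EFinM. Qed.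

Lemma quot_inf (t : R) : 0 < t -> ((+oo - gb%:E) * (t^-1)%:E)%E = +oo%E.
Proof. by move=> t0; apply: gt0_mulye; rewrite lte_fin invr_gt0. Qed.

Lemma notC_scale t w : 0 < t -> ~ C w -> ~ C (t *: w).
Proof.
move=> t0 nC Ct; apply: nC.
have ti : 0 <= t^-1 by rewrite invr_ge0 ltW.
have := CZ ti Ct; rewrite scalerA mulVf ?gt_eqF // scale1r; exact.
Qed.

Lemma subderiv_C w : C w -> subderiv g zb w = (H w)%:E.
Proof.
move=> Cw; rewrite /subderiv hgb.
have nw := nrmv_ge0 w.
pose e0 := Num.min 1 (delta / (nrmv w + 2)).
have e00 : 0 < e0 by rewrite lt_min ltr01 /= divr_gt0 ?delta_gt0 //; lra.
have e01 : e0 <= 1 by rewrite ge_min lexx.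
have e02 : e0 <= delta / (nrmv w + 2) by rewrite ge_min lexx orbT.
have small t w' : 0 < t < e0 -> nrmv (w' - w) < e0 -> nrmv (t *: w') < delta.
  move=> /andP[t0 te] hw'.
  rewrite nrmvZ ger0_norm; last exact: ltW.
  have : nrmv w' <= nrmv w + 1.
    have := nrmvD w (w' - w); rewrite addrC subrK; lra.
  move=> h1.
  have : t * nrmv w' <= t * (nrmv w + 1) by apply: ler_wpM2l => //; exact: ltW.
  have : t * (nrmv w + 1) < e0 * (nrmv w + 2) by nra.
  have : e0 * (nrmv w + 2) <= delta.
    by rewrite -ler_pdivlMr //; lra.
  lra.
apply/eqP; rewrite eq_le; apply/andP; split.
  apply/ereal_supP => y [e e0pos <-].
  pose t := Num.min e e0 / 2.
  have hm : 0 < Num.min e e0 by rewrite lt_min e0pos e00.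
  have t0 : 0 < t by rewrite divr_gt0.
  have m1 : Num.min e e0 <= e by rewrite ge_min lexx.
  have m2 : Num.min e e0 <= e0 by rewrite ge_min lexx orbT.
  have te : t < e by rewrite /t; lra.
  have te0 : t < e0 by rewrite /t; lra.
  apply: (@le_trans _ _ (((g (zb + t *: w) - gb%:E) * (t^-1)%:E))%E).
    apply: ereal_inf_lbound; exists (t, w) => //=; by rewrite t0 te subrr nrmv0.
  have ht : 0 < t < e0 by rewrite t0 te0.
  have hw0 : nrmv (w - w) < e0 by rewrite subrr nrmv0.
  have hs := small t w ht hw0.
  rewrite (loc_C hs (CZ (ltW t0) Cw)) quot_fin // H_scale; last exact: ltW.
  by rewrite addrC addKr mulrC mulKf ?gt_eqF.
apply: sup_approx => eta eta0.
pose e := Num.min e0 (eta / (Ma + 1)).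
have Ma0 := Ma_ge0.
have epos : 0 < e by rewrite lt_min e00 /= divr_gt0 //; lra.
have ee0 : e <= e0 by rewrite ge_min lexx.
have eeta : e <= eta / (Ma + 1) by rewrite ge_min lexx orbT.
have Mae : Ma * e <= eta.
  have : Ma * e <= Ma * (eta / (Ma + 1)) by apply: ler_wpM2l.
  have : Ma * (eta / (Ma + 1)) <= eta.
    rewrite mulrA ler_pdivrMr; last lra.
    nra.
  lra.
apply: (@le_trans _ _ (ereal_inf [set ((g (zb + q.1 *: q.2) - gb%:E) * (q.1^-1)%:E)%E
        | q in [set q : R * V | 0 < q.1 < e /\ nrmv (q.2 - w) < e]])).
  apply/ereal_infP => y [[t w'] /= [/andP[t0 te] hw'] <-].
  have te0 : t < e0 by exact: lt_le_trans te ee0.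
  have hw0 : nrmv (w' - w) < e0 by exact: lt_le_trans hw' ee0.
  have ht : 0 < t < e0 by rewrite t0 te0.
  have hs := small t w' ht hw0.
  case: (pselect (C w')) => Cw'.
    rewrite (loc_C hs (CZ (ltW t0) Cw')) quot_fin // H_scale; last exact: ltW.
    rewrite [gb + _]addrC addrK mulrC mulKf ?gt_eqF // lee_fin.
    have := H_lip w w'; rewrite nrmvB.
    have : Ma * nrmv (w' - w) <= Ma * e by apply: ler_wpM2l => //; exact: ltW.
    lra.
  by rewrite (notC_pinfty (notC_scale t0 Cw')) quot_inf // leey.
by apply: ereal_sup_ubound; exists e.
Qed.


Lemma subderiv_notC w : ~ C w -> subderiv g zb w = +oo%E.
Proof.
move=> nC; move: (nC) => /existsNP [j /not_implyP [hj hn]].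
have hp : 0 < dotv (a j) w by rewrite ltNge; apply/negP.
rewrite /subderiv hgb.
pose e1 := dotv (a j) w / (L1 (a j) + 1).
have L0 := L1_ge0 (a j).
have e10 : 0 < e1 by rewrite /e1 divr_gt0 //; lra.
apply/eqP; rewrite eq_le leey /=.
apply: (@le_trans _ _ (ereal_inf [set ((g (zb + q.1 *: q.2) - gb%:E) * (q.1^-1)%:E)%E
        | q in [set q : R * V | 0 < q.1 < e1 /\ nrmv (q.2 - w) < e1]])); last first.
  by apply: ereal_sup_ubound; exists e1.
apply/ereal_infP => y [[t w'] /= [/andP[t0 te] hw'] <-].
have nC' : ~ C w'.
  move=> Cw'; have := Cw' j hj.
  have := dotv_near (a j) w w'; rewrite nrmvB.
  have : L1 (a j) * nrmv (w' - w) <= L1 (a j) * e1 by apply: ler_wpM2l => //; exact: ltW.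
  have : L1 (a j) * e1 < dotv (a j) w.
    rewrite /e1 mulrA ltr_pdivrMr; last lra.
    nra.
  lra.
by rewrite (notC_pinfty (notC_scale t0 nC')) quot_inf.
Qed.

Lemma crit_char w : critical_cone g zb lb w <-> Kc cK w.
Proof.
rewrite Kc_char /critical_cone /=; split.
  move=> h; case: (pselect (C w)) => Cw.
    by split => //; move: h; rewrite subderiv_C // => /eqP; rewrite eqe => /eqP.
  by move: h; rewrite subderiv_notC.
by move=> [Cw eH]; rewrite subderiv_C // eH.
Qed.

End Fun.

Section Main.
Variables (R : realType) (m : nat) (g : 'rV[R]_m -> \bar R) (zb lb : 'rV[R]_m)
  (I : finType) (c : I -> 'rV[R]_m) (d : R).
Notation V := 'rV[R]_m.
Notation G := (gph_normal_cone (Kc c)).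
Notation S := (gph_subdiff g).
Hypothesis hsub : subdiff g zb lb.
Hypothesis hd : 0 < d.
Hypothesis hL : forall w v, nrmv w < d -> nrmv v < d ->
  (subdiff g (zb + w) (lb + v) <-> G (w, v)).

Lemma hloc : loc_eq S G (zb, lb) d.
Proof.
move=> [p1 p2] /pdist_lt [/= h1 h2].
rewrite /psub /= -(hL h1 h2) /gph_subdiff /=.
by rewrite !(addrC _ (_ - _)) !subrK.
Qed.

Lemma Spb : S (zb, lb). Proof. exact: hsub. Qed.

Lemma polar_sc v s : 0 < s -> (forall u, Kc c u -> dotv (s *: v) u <= 0) ->
  forall u, Kc c u -> dotv v u <= 0.
Proof.
move=> s0 h u Ku; have := h u Ku; rewrite dotvZl => hh.
rewrite leNgt; apply/negP => p; have := mulr_gt0 s0 p; lra.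
Qed.

Lemma subdiff_conv z mu1 mu2 th : 0 <= th <= 1 -> subdiff g z mu1 -> subdiff g z mu2 ->
  subdiff g z (th *: mu1 + (1 - th) *: mu2).
Proof.
move=> /andP[t0 t1] [f1 h1] [_ h2]; split => // x.
have := h1 x; have := h2 x.
rewrite -(fineK f1).
case: (g x) => [t| |]; [| by move=> _ _; rewrite leey | by move=> _ /=; rewrite leeNy_eq -EFinD].
rewrite -!EFinD !lee_fin dotvDl !dotvZl => e2 e1.
have : th * (fine (g z) + dotv mu1 (x - z)) <= th * t by apply: ler_wpM2l.
have : (1 - th) * (fine (g z) + dotv mu2 (x - z)) <= (1 - th) * t by apply: ler_wpM2l => //; lra.
lra.
Qed.

Lemma part_a : tangent_cone S (zb, lb) = G.
Proof. exact: (tangent_loc hd hloc (@G_closed R m I c) (G_cone c)). Qed.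

Lemma part_b : gph_sgderiv S (zb, lb) = mdiff G G.
Proof. exact: (sg_loc hd hloc (G_cone c) (@mdiff_closed R m I c)). Qed.

Section Sym.
Hypothesis Ksym : forall w, Kc c w -> Kc c (- w).

Lemma polar_orth v : (forall u, Kc c u -> dotv v u <= 0) -> forall u, Kc c u -> dotv v u = 0.
Proof.
move=> hv u Ku; apply/eqP; rewrite eq_le hv //=.
by have := hv _ (Ksym Ku); rewrite dotvNr oppr_le0.
Qed.

Lemma G_lin p : G p <-> Kc c p.1 /\ forall u, Kc c u -> dotv p.2 u = 0.
Proof.
case: p => w v; rewrite G_char /=; split.
  by move=> [Kw [hv hw]]; split => //; apply: polar_orth.
move=> [Kw hv]; split => //; split; last exact: hv.
by move=> u Ku; rewrite hv.
Qed.

Lemma G_add p q : G p -> G q -> G (padd p q).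
Proof.
move=> /G_lin [K1 h1] /G_lin [K2 h2]; apply/G_lin; split; first exact: KcD.
by move=> u Ku; rewrite /= dotvDl h1 // h2 // addr0.
Qed.

Lemma G_opp p : G p -> G (pscale (-1) p).
Proof.
move=> /G_lin [K1 h1]; apply/G_lin; split; first by rewrite /= scaleN1r; exact: Ksym.
by move=> u Ku; rewrite /= scaleN1r dotvNl h1 // oppr0.
Qed.

Lemma G_sub p q : G p -> G q -> G (psub p q).
Proof.
move=> Gp Gq; have := G_add Gp (G_opp Gq).
by rewrite /padd /psub /pscale /= !scaleN1r.
Qed.

Lemma mdiffGG : mdiff G G = G.
Proof.
apply/seteqP; split => p.
  by move=> [x [y [Gx [Gy ->]]]]; exact: G_sub.
move=> Gp; exists p, (@pz R m); split => //; split; first by case: (G_cone c).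
by case: p {Gp} => p1 p2; rewrite /psub /pz /= !subr0.
Qed.

Lemma near_good z l : S (z, l) -> pdist (z, l) (zb, lb) < d / 2 ->
  strictly_proto_diff S (z, l) /\ gph_sgderiv S (z, l) = gph_gderiv S (z, l).
Proof.
move=> Szl hz.
have hl := loc_shift hloc G_add G_sub Szl hz.
have d2 : 0 < d / 2 by rewrite divr_gt0.
have ht := tangent_loc d2 hl (@G_closed R m I c) (G_cone c).
have hs : gph_sgderiv S (z, l) = G.
  by rewrite (sg_loc d2 hl (G_cone c) (@mdiff_closed R m I c)) mdiffGG.
have hi : gph_sgderiv_inner S (z, l) = G.
  apply/seteqP; split.
    by move=> v /(inner_sub Szl); rewrite hs.
  exact: (inner_loc d2 hl (G_cone c) G_add).
split; first by rewrite /strictly_proto_diff hs hi.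
by rewrite hs /gph_gderiv ht.
Qed.

End Sym.


Lemma G0v v : (forall u, Kc c u -> dotv v u <= 0) -> G (0, v).
Proof.
move=> hv; apply/G_char; split; first exact: Kc0.
by split => //; rewrite dotv0r.
Qed.

Lemma S0v v : nrmv v < d -> (subdiff g zb (lb + v) <-> G (0, v)).
Proof. by move=> hv; rewrite -hL ?nrmv0 // addr0. Qed.

Lemma Ksym_of (psym : forall v, (forall u, Kc c u -> dotv v u <= 0) ->
                       forall u, Kc c u -> dotv (- v) u <= 0) :
  forall w, Kc c w -> Kc c (- w).
Proof.
move=> w Kw kk; rewrite dotvNr.
have := psym (c kk) (fun u Ku => Ku kk) w Kw; rewrite dotvNl; lra.
Qed.

Lemma small_scale (v : V) (e : R) : 0 < e -> exists2 s, 0 < s & nrmv (s *: v) < e.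
Proof.
move=> e0; exists (e / (2 * (nrmv v + 1))).
  by apply: divr_gt0 => //; have := nrmv_ge0 v; lra.
rewrite nrmvZ ger0_norm; last by apply: divr_ge0; [exact: ltW|have := nrmv_ge0 v; lra].
have n0 := nrmv_ge0 v.
rewrite mulrAC ltr_pdivrMr; last lra.
nra.
Qed.

Lemma part_c : rel_int (subdiff g zb) lb <->
  exists d' : R, 0 < d' /\ forall z l, S (z, l) -> pdist (z, l) (zb, lb) < d' ->
    strictly_proto_diff S (z, l) /\ gph_sgderiv S (z, l) = gph_gderiv S (z, l).
Proof.
split.
  move=> [_ [e [e0 hri]]].
  have psym v : (forall u, Kc c u -> dotv v u <= 0) -> forall u, Kc c u -> dotv (- v) u <= 0.
    move=> hv.
    have de : 0 < Num.min d e by rewrite lt_min hd e0.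
    have [s s0 hs] := small_scale v de.
    have hsd : nrmv (s *: v) < d by apply: (lt_le_trans hs); rewrite ge_min lexx.
    have hse : nrmv (s *: v) < e by apply: (lt_le_trans hs); rewrite ge_min lexx orbT.
    have S1 : subdiff g zb (lb + s *: v).
      apply/(S0v hsd); apply: G0v => u Ku; rewrite dotvZl; apply: mulr_ge0_le0; [exact: ltW|exact: hv].
    have S2 : subdiff g zb (lb + - (s *: v)).
      apply: hri; last by rewrite addrC addKr nrmvN.
      exists 2, (fun i : 'I_2 => if (i : nat) == 0%N then lb else lb + s *: v),
        (fun i : 'I_2 => if (i : nat) == 0%N then 2%:R else -1).
      split; first by move=> i; case: ifP => _ //.
      split; first by rewrite !big_ord_recl big_ord0 /=; lra.
      rewrite !big_ord_recl big_ord0 /= addr0 scaleN1r opprD.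
      by rewrite scaler_nat mulr2n -addrA addNKr.
    have hsd' : nrmv (- (s *: v)) < d by rewrite nrmvN.
    move: S2 => /(S0v hsd') /G_char [_ [h _]].
    apply: (polar_sc s0) => u Ku; have := h u Ku; by rewrite scalerN.
  have Ksym := Ksym_of psym.
  exists (d / 2); split; first by rewrite divr_gt0.
  by move=> z l Szl hz; apply: near_good.
move=> [d' [d'0 h]].
have hpp : pdist (zb, lb) (zb, lb) < d' by rewrite pdist_refl.
have [_ eq] := h zb lb hsub hpp.
move: eq; rewrite part_b /gph_gderiv part_a => eq.
have psym v : (forall u, Kc c u -> dotv v u <= 0) -> forall u, Kc c u -> dotv (- v) u <= 0.
  move=> hv; have : mdiff G G (psub (@pz R m) (0, v)).
    by exists (@pz R m), (0, v); split; [case: (G_cone c)|split => //; exact: G0v].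
  rewrite eq /psub /pz /= subrr sub0r => /G_char [_ [hh _]]; exact: hh.
have orth v : (forall u, Kc c u -> dotv v u <= 0) -> forall u, Kc c u -> dotv v u = 0.
  move=> hv u Ku; apply/eqP; rewrite eq_le hv //=.
  by have := psym v hv u Ku; rewrite dotvNl oppr_le0.
split; first exact: hsub.
exists d; split => // y [n [pts [mu [hpts [smu ey]]]]] hy.
have hp i : forall u, Kc c u -> dotv (pts i - lb) u = 0.
  apply: orth.
  have [s s0 hs] := small_scale (pts i - lb) hd.
  pose th := Num.min 1 s.
  have th0 : 0 < th by rewrite lt_min ltr01 s0.
  have th1 : th <= 1 by rewrite ge_min lexx.
  have hth : nrmv (th *: (pts i - lb)) < d.
    apply: le_lt_trans hs; rewrite !nrmvZ; apply: ler_wpM2r; first exact: nrmv_ge0.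
    by rewrite !ger0_norm ?ge_min ?lexx ?orbT //; apply: ltW.
  have := @subdiff_conv zb (pts i) lb th _ (hpts i) hsub.
  rewrite th1 (ltW th0) /= => /(_ isT).
  rewrite conv_eq => /(S0v hth) /G_char [_ [hh _]].
  exact: polar_sc th0 hh.
have ey' : y - lb = \sum_i mu i *: (pts i - lb).
  have -> : \sum_i mu i *: (pts i - lb) = \sum_i mu i *: pts i - \sum_i mu i *: lb.
    by rewrite -sumrB; apply: eq_bigr => i _; rewrite scalerBr.
  by rewrite ey -scaler_suml smu scale1r.
have hyK : forall u, Kc c u -> dotv (y - lb) u <= 0.
  move=> u Ku; rewrite ey' dotv_suml; apply: sumr_le0 => i _.
  by rewrite dotvZl hp // mulr0.
have := (S0v hy).2 (G0v hyK).
by rewrite addrC subrK.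
Qed.

End Main.

Unset Implicit Arguments. Set Strict Implicit. Set Printing Implicit Defensive.

Theorem theorem3p5 (R : realType) (m : nat) (g : 'rV[R]_m -> \bar R)
    (zb lb : 'rV[R]_m) :
  polyhedral_fun g -> subdiff g zb lb ->
  (* (a) *)
  (gph_gderiv (gph_subdiff g) (zb, lb) = tangent_cone (gph_subdiff g) (zb, lb) /\
   tangent_cone (gph_subdiff g) (zb, lb) =
     gph_normal_cone (critical_cone g zb lb)) /\
  (* (b) *)
  gph_sgderiv (gph_subdiff g) (zb, lb) =
    mdiff (gph_normal_cone (critical_cone g zb lb))
          (gph_normal_cone (critical_cone g zb lb)) /\
  (* (c) *)
  (rel_int (subdiff g zb) lb <->
   exists d : R, 0 < d /\
     forall z l : 'rV[R]_m, gph_subdiff g (z, l) -> pdist (z, l) (zb, lb) < d ->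
       strictly_proto_diff (gph_subdiff g) (z, l) /\
       gph_sgderiv (gph_subdiff g) (z, l) = gph_gderiv (gph_subdiff g) (z, l)).
Proof.
move=> [[hprop _] [k [a [b [cc hepi]]]]] hsub.
have hK : critical_cone g zb lb = Kc (cK g a b cc zb lb).
  by apply/funext => w; apply/propext; exact: (crit_char hepi hprop hsub).
have [d d0 hL] := LocWV hepi hprop hsub.
rewrite hK.
split; first by split; [by [] | exact: (part_a d0 hL)].
split; first exact: (part_b d0 hL).
exact: (part_c hsub d0 hL).
Qed.
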